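(* The category $\mathsf{XMod}(\mathsf{GpGd})$ of crossed modules over group-groupoids is equivalent to the category $\mathsf{DGG}$ of double group-groupoids.
   Context: A group-groupoid $G$ is a groupoid with set of arrows $G$ and set of objects $G_0$, source and target maps $d_0,d_1\colon G\to G_0$, identity map $\varepsilon\colon G_0\to G$ ($\varepsilon(x)=1_x$), and composition $b\circ a$ defined when $d_1(a)=d_0(b)$, such that $G$ and $G_0$ are groups (written additively) and $d_0,d_1,\varepsilon$, the groupoid inversion and the composition are group homomorphisms. A morphism of group-groupoids is a functor that is a group homomorphism on arrows and on objects. An action of a group-groupoid $H$ on a group-groupoid $G$ is called a derived action if it is an action $(b,a)\mapsto b\cdot a$ of the group of arrows $H$ on the group of arrows $G$ by group automorphisms such that, for a suitable group structure on $G_0\times H_0$, the product groupoid $G\times H$ on $G_0\times H_0$ with addition $(a,b)+(a_1,b_1)=(a+b\cdot a_1,\,b+b_1)$ is a group-groupoid (denoted $G\rtimes H$); equivalently it arises from a split extension of group-groupoids as $b\cdot a=s(b)+a-s(b)$. A crossed module over group-groupoids is a triple $(G,H,\partial)$ where $G,H$ are group-groupoids, $H$ acts on $G$ by a derived action, and $\partial=(\partial_1,\partial_0)\colon G\to H$ is a morphism of group-groupoids ($\partial_1$ on arrows, $\partial_0$ on objects) such that $(G,H,\partial_1)$ is a crossed module of groups: $\partial_1(b\cdot a)=b+\partial_1(a)-b$ and $\partial_1(a)\cdot a_1=a+a_1-a$ for all $a,a_1\in G$, $b\in H$. A morphism $(f,g)\colon(G,H,\partial)\to(G',H',\partial')$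 in $\mathsf{XMod}(\mathsf{GpGd})$ is a pair of group-groupoid morphisms $f\colon G\to G'$, $g\colon H\to H'$ with $g\partial=\partial' f$ and $f(b\cdot a)=g(b)\cdot f(a)$ for all arrows $a\in G$, $b\in H$. A double group-groupoid $(S,H,V,P)$ is a groupoid object in the category of group-groupoids: it consists of a group-groupoid $S\rightrightarrows V$ (vertical structure, with source/target $d_0^v,d_1^v$, identities $\varepsilon^v$, composition $\circ_v$), a group-groupoid $H\rightrightarrows P$ (with $d_0^H,d_1^H,\varepsilon^H$), and morphisms of group-groupoids $d_0,d_1\colon (S\rightrightarrows V)\to(H\rightrightarrows P)$, $\varepsilon\colon(H\rightrightarrows P)\to(S\rightrightarrows V)$, and a composition morphism $(S\rightrightarrows V)\times_{(H\rightrightarrows P)}(S\rightrightarrows V)\to(S\rightrightarrows V)$ satisfying the groupoid axioms. Their arrow components $d_0^h,d_1^h\colon S\to H$, $\varepsilon^h\colon H\to S$, $\circ_h$ make $S$ a group-groupoid over $H$ (horizontal structure) and their object components $d_0^V,d_1^V\colon V\to P$, $\varepsilon^V$, $\circ_V$ make $V$ a group-groupoid over $P$. A morphism of double group-groupoids is a quadruple of group homomorphisms $f_s\colon S\to S'$, $f_h\colon H\to H'$, $f_v\colon V\to V'$, $f_p\colon P\to P'$ commuting with all structure maps (sources, targets, identities, compositions, inverses, horizontal and vertical). *)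

(* Defs.v *)
Set Implicit Arguments.

Definition is_group {T : Type} (add : T -> T -> T) (zero : T) (neg : T -> T) : Prop :=
  (forall x y z, add x (add y z) = add (add x y) z) /\
  (forall x, add zero x = x) /\ (forall x, add x zero = x) /\
  (forall x, add (neg x) x = zero) /\ (forall x, add x (neg x) = zero).

Definition is_ghom {A B : Type} (addA : A -> A -> A) (addB : B -> B -> B) (f : A -> B) : Prop :=
  forall x y, f (addA x y) = addB (f x) (f y).

(* ---------- groupoids: composition  c b a = b o a, defined when t a = s b ---------- *)
Definition is_groupoid {A O : Type} (s t : A -> O) (e : O -> A)
  (c : A -> A -> A) (i : A -> A) : Prop :=
  (forall x, s (e x) = x) /\ (forall x, t (e x) = x) /\
  (forall a b, t a = s b -> s (c b a) = s a /\ t (c b a) = t b) /\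
  (forall a b d, t a = s b -> t b = s d -> c d (c b a) = c (c d b) a) /\
  (forall a, c (e (t a)) a = a) /\ (forall a, c a (e (s a)) = a) /\
  (forall a, s (i a) = t a /\ t (i a) = s a) /\
  (forall a, c (i a) a = e (s a)) /\ (forall a, c a (i a) = e (t a)).

Definition is_gpgd {A O : Type}
  (addA : A -> A -> A) (zeroA : A) (negA : A -> A)
  (addO : O -> O -> O) (zeroO : O) (negO : O -> O)
  (s t : A -> O) (e : O -> A) (c : A -> A -> A) (i : A -> A) : Prop :=
  is_group addA zeroA negA /\ is_group addO zeroO negO /\
  is_groupoid s t e c i /\
  is_ghom addA addO s /\ is_ghom addA addO t /\ is_ghom addO addA e /\
  is_ghom addA addA i /\
  (forall a b a1 b1, t a = s b -> t a1 = s b1 ->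
     c (addA b b1) (addA a a1) = addA (c b a) (c b1 a1)).

Record GpGd : Type := MkGpGd {
  Ar : Type; Ob : Type;
  addA : Ar -> Ar -> Ar; zeroA : Ar; negA : Ar -> Ar;
  addO : Ob -> Ob -> Ob; zeroO : Ob; negO : Ob -> Ob;
  src : Ar -> Ob; tgt : Ar -> Ob; idn : Ob -> Ar;
  cmp : Ar -> Ar -> Ar;
  inv : Ar -> Ar;
  gpgd_ax : is_gpgd addA zeroA negA addO zeroO negO src tgt idn cmp inv }.

Definition is_gg_mor {A O A' O' : Type}
  (addA : A -> A -> A) (addO : O -> O -> O) (s t : A -> O) (e : O -> A) (c : A -> A -> A)
  (addA' : A' -> A' -> A') (addO' : O' -> O' -> O') (s' t' : A' -> O') (e' : O' -> A')
  (c' : A' -> A' -> A') (fa : A -> A') (fo : O -> O') : Prop :=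
  is_ghom addA addA' fa /\ is_ghom addO addO' fo /\
  (forall a, s' (fa a) = fo (s a)) /\ (forall a, t' (fa a) = fo (t a)) /\
  (forall x, fa (e x) = e' (fo x)) /\
  (forall a b, t a = s b -> fa (c b a) = c' (fa b) (fa a)).

Definition is_gpgd_mor (G H : GpGd) (fa : Ar G -> Ar H) (fo : Ob G -> Ob H) : Prop :=
  is_gg_mor (addA G) (addO G) (src G) (tgt G) (idn G) (cmp G)
            (addA H) (addO H) (src H) (tgt H) (idn H) (cmp H) fa fo.

Lemma is_gg_mor_comp {A O A' O' A'' O'' : Type}
  addA addO s t e c addA' addO' s' t' e' c' addA'' addO'' s'' t'' e'' c''
  (fa : A -> A') (fo : O -> O') (ga : A' -> A'') (go : O' -> O'') :
  is_gg_mor addA addO s t e c addA' addO' s' t' e' c' fa fo ->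
  is_gg_mor addA' addO' s' t' e' c' addA'' addO'' s'' t'' e'' c'' ga go ->
  is_gg_mor addA addO s t e c addA'' addO'' s'' t'' e'' c''
            (fun a => ga (fa a)) (fun x => go (fo x)).
Proof.
  intros (F1 & F2 & F3 & F4 & F5 & F6) (G1 & G2 & G3 & G4 & G5 & G6).
  split; [|split; [|split; [|split; [|split]]]].
  - intros x y; rewrite F1, G1; reflexivity.
  - intros x y; rewrite F2, G2; reflexivity.
  - intro a; rewrite G3, F3; reflexivity.
  - intro a; rewrite G4, F4; reflexivity.
  - intro x; rewrite F5, G5; reflexivity.
  - intros a b Hab; rewrite (F6 a b Hab); apply G6.
    rewrite F4, F3, Hab; reflexivity.
Qed.

Lemma is_gg_mor_id {A O : Type} addA addO (s t : A -> O) e c :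
  is_gg_mor addA addO s t e c addA addO s t e c (fun a => a) (fun x => x).
Proof.
  unfold is_gg_mor, is_ghom; repeat split; intros; reflexivity.
Qed.

Definition is_derived_action (G H : GpGd) (act : Ar H -> Ar G -> Ar G) : Prop :=
  (forall a, act (zeroA H) a = a) /\
  (forall b b1 a, act (addA H b b1) a = act b (act b1 a)) /\
  (forall b a a1, act b (addA G a a1) = addA G (act b a) (act b a1)) /\
  exists (addP : Ob G * Ob H -> Ob G * Ob H -> Ob G * Ob H)
         (zeroP : Ob G * Ob H) (negP : Ob G * Ob H -> Ob G * Ob H),
    is_gpgd
      (fun p q : Ar G * Ar H => (addA G (fst p) (act (snd p) (fst q)), addA H (snd p) (snd q)))
      (zeroA G, zeroA H)
      (fun p : Ar G * Ar H => (act (negA H (snd p)) (negA G (fst p)), negA H (snd p)))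
      addP zeroP negP
      (fun p : Ar G * Ar H => (src G (fst p), src H (snd p)))
      (fun p : Ar G * Ar H => (tgt G (fst p), tgt H (snd p)))
      (fun x : Ob G * Ob H => (idn G (fst x), idn H (snd x)))
      (fun q p : Ar G * Ar H => (cmp G (fst q) (fst p), cmp H (snd q) (snd p)))
      (fun p : Ar G * Ar H => (inv G (fst p), inv H (snd p))).

Record XModGG : Type := MkXModGG {
  XG : GpGd; XH : GpGd;
  xact : Ar XH -> Ar XG -> Ar XG;
  bd1 : Ar XG -> Ar XH; bd0 : Ob XG -> Ob XH;
  xact_derived : is_derived_action XG XH xact;
  bd_mor : is_gpgd_mor XG XH bd1 bd0;
  xm1 : forall b a, bd1 (xact b a) = addA XH (addA XH b (bd1 a)) (negA XH b);
  xm2 : forall a a1, xact (bd1 a) a1 = addA XG (addA XG a a1) (negA XG a) }.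

Record XHom (X Y : XModGG) : Type := MkXHom {
  hfa : Ar (XG X) -> Ar (XG Y); hfo : Ob (XG X) -> Ob (XG Y);
  hga : Ar (XH X) -> Ar (XH Y); hgo : Ob (XH X) -> Ob (XH Y);
  hf_mor : is_gpgd_mor (XG X) (XG Y) hfa hfo;
  hg_mor : is_gpgd_mor (XH X) (XH Y) hga hgo;
  h_comm1 : forall a, hga (bd1 X a) = bd1 Y (hfa a);
  h_comm0 : forall x, hgo (bd0 X x) = bd0 Y (hfo x);
  h_act : forall b a, hfa (xact X b a) = xact Y (hga b) (hfa a) }.

Definition xhom_eq (X Y : XModGG) (f g : XHom X Y) : Prop :=
  (forall a, hfa f a = hfa g a) /\ (forall x, hfo f x = hfo g x) /\
  (forall b, hga f b = hga g b) /\ (forall y, hgo f y = hgo g y).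

Definition xhom_id (X : XModGG) : XHom X X.
Proof.
  refine (@MkXHom X X (fun a => a) (fun x => x) (fun b => b) (fun y => y) _ _ _ _ _).
  - apply is_gg_mor_id.
  - apply is_gg_mor_id.
  - reflexivity.
  - reflexivity.
  - reflexivity.
Defined.

Definition xhom_comp (X Y Z : XModGG) (g : XHom Y Z) (f : XHom X Y) : XHom X Z.
Proof.
  refine (@MkXHom X Z (fun a => hfa g (hfa f a)) (fun x => hfo g (hfo f x))
            (fun b => hga g (hga f b)) (fun y => hgo g (hgo f y)) _ _ _ _ _).
  - eapply is_gg_mor_comp; [exact (hf_mor f) | exact (hf_mor g)].
  - eapply is_gg_mor_comp; [exact (hg_mor f) | exact (hg_mor g)].
  - intro a; rewrite (h_comm1 f), (h_comm1 g); reflexivity.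
  - intro x; rewrite (h_comm0 f), (h_comm0 g); reflexivity.
  - intros b a; rewrite (h_act f), (h_act g); reflexivity.
Defined.

(* ---------- double group-groupoids (groupoid objects in GpGd) ---------- *)
Record DGG : Type := MkDGG {
  SV : GpGd;   (* vertical group-groupoid S => V *)
  HP : GpGd;   (* group-groupoid H => P *)
  (* arrow components: horizontal structure S => H *)
  hs : Ar SV -> Ar HP; ht : Ar SV -> Ar HP; he : Ar HP -> Ar SV;
  hc : Ar SV -> Ar SV -> Ar SV; hi : Ar SV -> Ar SV;
  (* object components: V => P *)
  os : Ob SV -> Ob HP; ot : Ob SV -> Ob HP; oe : Ob HP -> Ob SV;
  oc : Ob SV -> Ob SV -> Ob SV; oi : Ob SV -> Ob SV;
  ax_SH : is_gpgd (addA SV) (zeroA SV) (negA SV) (addA HP) (zeroA HP) (negA HP) hs ht he hc hi;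
  ax_VP : is_gpgd (addO SV) (zeroO SV) (negO SV) (addO HP) (zeroO HP) (negO HP) os ot oe oc oi;
  d0_mor : is_gpgd_mor SV HP hs os;
  d1_mor : is_gpgd_mor SV HP ht ot;
  eps_mor : is_gpgd_mor HP SV he oe;
  (* the composition (hc, oc) is a functor on the pullback group-groupoid
     (its group-homomorphism part is the last clause of ax_SH / ax_VP) *)
  comp_src : forall u u', ht u = hs u' -> src SV (hc u' u) = oc (src SV u') (src SV u);
  comp_tgt : forall u u', ht u = hs u' -> tgt SV (hc u' u) = oc (tgt SV u') (tgt SV u);
  comp_idn : forall v v', ot v = os v' -> hc (idn SV v') (idn SV v) = idn SV (oc v' v);
  interchange : forall u u' w w', ht u = hs u' -> ht w = hs w' ->
      tgt SV u = src SV w -> tgt SV u' = src SV w' ->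
      cmp SV (hc w' w) (hc u' u) = hc (cmp SV w' u') (cmp SV w u) }.

Definition is_dgg_mor (D E : DGG) (fs : Ar (SV D) -> Ar (SV E)) (fh : Ar (HP D) -> Ar (HP E))
  (fv : Ob (SV D) -> Ob (SV E)) (fp : Ob (HP D) -> Ob (HP E)) : Prop :=
  is_gpgd_mor (SV D) (SV E) fs fv /\ (forall a, fs (inv (SV D) a) = inv (SV E) (fs a)) /\
  is_gpgd_mor (HP D) (HP E) fh fp /\ (forall a, fh (inv (HP D) a) = inv (HP E) (fh a)) /\
  is_gg_mor (addA (SV D)) (addA (HP D)) (hs D) (ht D) (he D) (hc D)
            (addA (SV E)) (addA (HP E)) (hs E) (ht E) (he E) (hc E) fs fh /\
  (forall a, fs (hi D a) = hi E (fs a)) /\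
  is_gg_mor (addO (SV D)) (addO (HP D)) (os D) (ot D) (oe D) (oc D)
            (addO (SV E)) (addO (HP E)) (os E) (ot E) (oe E) (oc E) fv fp /\
  (forall x, fv (oi D x) = oi E (fv x)).

Record DHom (D E : DGG) : Type := MkDHom {
  dfs : Ar (SV D) -> Ar (SV E); dfh : Ar (HP D) -> Ar (HP E);
  dfv : Ob (SV D) -> Ob (SV E); dfp : Ob (HP D) -> Ob (HP E);
  dmor : is_dgg_mor D E dfs dfh dfv dfp }.

Definition dhom_eq (D E : DGG) (f g : DHom D E) : Prop :=
  (forall a, dfs f a = dfs g a) /\ (forall a, dfh f a = dfh g a) /\
  (forall x, dfv f x = dfv g x) /\ (forall x, dfp f x = dfp g x).

Definition dhom_id (D : DGG) : DHom D D.
Proof.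
  refine (@MkDHom D D (fun a => a) (fun a => a) (fun x => x) (fun x => x) _).
  unfold is_dgg_mor; repeat split; try apply is_gg_mor_id; intros; reflexivity.
Defined.

Definition dhom_comp (D E F : DGG) (g : DHom E F) (f : DHom D E) : DHom D F.
Proof.
  refine (@MkDHom D F (fun a => dfs g (dfs f a)) (fun a => dfh g (dfh f a))
            (fun x => dfv g (dfv f x)) (fun x => dfp g (dfp f x)) _).
  destruct (dmor f) as (F1 & F2 & F3 & F4 & F5 & F6 & F7 & F8).
  destruct (dmor g) as (G1 & G2 & G3 & G4 & G5 & G6 & G7 & G8).
  split; [|split; [|split; [|split; [|split; [|split; [|split]]]]]].
  - eapply is_gg_mor_comp; [exact F1 | exact G1].
  - intro a; rewrite F2, G2; reflexivity.
  - eapply is_gg_mor_comp; [exact F3 | exact G3].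
  - intro a; rewrite F4, G4; reflexivity.
  - eapply is_gg_mor_comp; [exact F5 | exact G5].
  - intro a; rewrite F6, G6; reflexivity.
  - eapply is_gg_mor_comp; [exact F7 | exact G7].
  - intro a; rewrite F8, G8; reflexivity.
Defined.

Record Cat : Type := MkCat {
  cobj : Type;
  chom : cobj -> cobj -> Type;
  cheq : forall x y, chom x y -> chom x y -> Prop;
  cid : forall x, chom x x;
  ccomp : forall x y z, chom y z -> chom x y -> chom x z }.

Arguments cheq {c x y} _ _.
Arguments cid {c} x.
Arguments ccomp {c x y z} _ _.

Definition is_functor (C D : Cat) (F0 : cobj C -> cobj D)
  (F1 : forall x y, chom C x y -> chom D (F0 x) (F0 y)) : Prop :=
  (forall x y (f g : chom C x y), cheq f g -> cheq (F1 x y f) (F1 x y g)) /\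
  (forall x, cheq (F1 x x (cid x)) (cid (F0 x))) /\
  (forall x y z (g : chom C y z) (f : chom C x y),
      cheq (F1 x z (ccomp g f)) (ccomp (F1 y z g) (F1 x y f))).

Definition is_nat_iso (C D : Cat) (F0 G0 : cobj C -> cobj D)
  (F1 : forall x y, chom C x y -> chom D (F0 x) (F0 y))
  (G1 : forall x y, chom C x y -> chom D (G0 x) (G0 y))
  (eta : forall x, chom D (F0 x) (G0 x)) : Prop :=
  (forall x y (f : chom C x y), cheq (ccomp (G1 x y f) (eta x)) (ccomp (eta y) (F1 x y f))) /\
  (forall x, exists g : chom D (G0 x) (F0 x),
      cheq (ccomp g (eta x)) (cid (F0 x)) /\ cheq (ccomp (eta x) g) (cid (G0 x))).

Definition cat_equivalent (C D : Cat) : Prop :=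
  exists (F0 : cobj C -> cobj D) (F1 : forall x y, chom C x y -> chom D (F0 x) (F0 y))
         (G0 : cobj D -> cobj C) (G1 : forall x y, chom D x y -> chom C (G0 x) (G0 y)),
    is_functor C D F0 F1 /\ is_functor D C G0 G1 /\
    (exists eta : forall x, chom C x (G0 (F0 x)),
        is_nat_iso C C (fun x => x) (fun x => G0 (F0 x))
          (fun x y f => f) (fun x y f => G1 (F0 x) (F0 y) (F1 x y f)) eta) /\
    (exists eps : forall y, chom D (F0 (G0 y)) y,
        is_nat_iso D D (fun y => F0 (G0 y)) (fun y => y)
          (fun x y f => F1 (G0 x) (G0 y) (G1 x y f)) (fun x y f => f) eps).

Definition XModGpGd : Cat := MkCat XHom xhom_eq xhom_id xhom_comp.
Definition DblGpGd : Cat := MkCat DHom dhom_eq dhom_id dhom_comp.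

(* Main.v *)
Require Import Defs.
From Stdlib Require Import ClassicalEpsilon ProofIrrelevance.

Lemma gassoc {T} {add : T -> T -> T} {z n} (H : is_group add z n) x y w :
  add (add x y) w = add x (add y w).
Proof. destruct H as (A & _). rewrite A; reflexivity. Qed.
Lemma g0l {T} {add : T -> T -> T} {z n} (H : is_group add z n) x : add z x = x.
Proof. apply H. Qed.
Lemma g0r {T} {add : T -> T -> T} {z n} (H : is_group add z n) x : add x z = x.
Proof. apply H. Qed.
Lemma gnl {T} {add : T -> T -> T} {z n} (H : is_group add z n) x : add (n x) x = z.
Proof. apply H. Qed.
Lemma gnr {T} {add : T -> T -> T} {z n} (H : is_group add z n) x : add x (n x) = z.
Proof. apply H. Qed.
Lemma gcl {T} {add : T -> T -> T} {z n} (H : is_group add z n) x y : add (n x) (add x y) = y.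
Proof. rewrite <- (gassoc H), (gnl H), (g0l H); reflexivity. Qed.
Lemma gcr {T} {add : T -> T -> T} {z n} (H : is_group add z n) x y : add x (add (n x) y) = y.
Proof. rewrite <- (gassoc H), (gnr H), (g0l H); reflexivity. Qed.
Lemma gcancel_l {T} {add : T -> T -> T} {z n} (H : is_group add z n) x y w :
  add x y = add x w -> y = w.
Proof. intro E. rewrite <- (gcl H x y), E, (gcl H). reflexivity. Qed.
Lemma gcancel_r {T} {add : T -> T -> T} {z n} (H : is_group add z n) x y w :
  add y x = add w x -> y = w.
Proof. intro E. rewrite <- (g0r H y), <- (gnr H x), <- (gassoc H), E, (gassoc H), (gnr H), (g0r H).
  reflexivity. Qed.
Lemma gnuniq {T} {add : T -> T -> T} {z n} (H : is_group add z n) x y : add x y = z -> y = n x.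
Proof. intro E. apply (gcancel_l H x). rewrite E, (gnr H). reflexivity. Qed.
Lemma gnn {T} {add : T -> T -> T} {z n} (H : is_group add z n) x : n (n x) = x.
Proof. symmetry. apply (gnuniq H). apply (gnl H). Qed.
Lemma gn0 {T} {add : T -> T -> T} {z n} (H : is_group add z n) : n z = z.
Proof. symmetry. apply (gnuniq H). apply (g0l H). Qed.
Lemma gnadd {T} {add : T -> T -> T} {z n} (H : is_group add z n) x y :
  n (add x y) = add (n y) (n x).
Proof. symmetry. apply (gnuniq H). rewrite (gassoc H), (gcr H), (gnr H). reflexivity. Qed.
Lemma gsolve_l {T} {add : T -> T -> T} {z n} (H : is_group add z n) x y w :
  add x y = w -> x = add w (n y).
Proof. intro E. rewrite <- E, (gassoc H), (gnr H), (g0r H). reflexivity. Qed.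

Ltac gnorm H := repeat first [ rewrite (gassoc H) | rewrite (g0l H) | rewrite (g0r H)
  | rewrite (gnl H) | rewrite (gnr H) | rewrite (gcl H) | rewrite (gcr H)
  | rewrite (gnn H) | rewrite (gn0 H) | rewrite (gnadd H) ].

Lemma hom0 {A B} {addA : A -> A -> A} {zA nA} {addB : B -> B -> B} {zB nB} (f : A -> B) :
  is_group addA zA nA -> is_group addB zB nB -> is_ghom addA addB f -> f zA = zB.
Proof. intros HA HB Hf. apply (gcancel_l HB (f zA)). rewrite <- Hf, (g0l HA), (g0r HB).
  reflexivity. Qed.
Lemma homn {A B} {addA : A -> A -> A} {zA nA} {addB : B -> B -> B} {zB nB} (f : A -> B) :
  is_group addA zA nA -> is_group addB zB nB -> is_ghom addA addB f -> forall x, f (nA x) = nB (f x).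
Proof. intros HA HB Hf x. apply (gnuniq HB). rewrite <- Hf, (gnr HA). apply (hom0 f HA HB Hf). Qed.

Lemma sig_inj {A} {P : A -> Prop} (u v : {x | P x}) : proj1_sig u = proj1_sig v -> u = v.
Proof. destruct u as [u pu], v as [v pv]; simpl; intro E; subst. f_equal; apply proof_irrelevance. Qed.

Lemma test {T} {add : T -> T -> T} {z n} (H : is_group add z n) a b c :
  add (add a (n b)) (add b (n (add c a))) = add a (add (n a) (n c)).
Proof. gnorm H. reflexivity. Qed.

Definition GG {A O} addA zA nA addO zO nO s t e c i :=
  @is_gpgd A O addA zA nA addO zO nO s t e c i.

Lemma ggA {A O addA zA nA addO zO nO s t e c i} (Hg : @is_gpgd A O addA zA nA addO zO nO s t e c i) :
  is_group addA zA nA. Proof. apply Hg. Qed.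
Lemma ggO {A O addA zA nA addO zO nO s t e c i} (Hg : @is_gpgd A O addA zA nA addO zO nO s t e c i) :
  is_group addO zO nO. Proof. apply Hg. Qed.
Lemma gg_se {A O addA zA nA addO zO nO s t e c i} (Hg : @is_gpgd A O addA zA nA addO zO nO s t e c i) x :
  s (e x) = x. Proof. apply Hg. Qed.
Lemma gg_te {A O addA zA nA addO zO nO s t e c i} (Hg : @is_gpgd A O addA zA nA addO zO nO s t e c i) x :
  t (e x) = x. Proof. apply Hg. Qed.
Lemma gg_sc {A O addA zA nA addO zO nO s t e c i} (Hg : @is_gpgd A O addA zA nA addO zO nO s t e c i) a b :
  t a = s b -> s (c b a) = s a. Proof. intro E; apply Hg, E. Qed.
Lemma gg_tc {A O addA zA nA addO zO nO s t e c i} (Hg : @is_gpgd A O addA zA nA addO zO nO s t e c i) a b :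
  t a = s b -> t (c b a) = t b. Proof. intro E; apply Hg, E. Qed.
Lemma gg_idl {A O addA zA nA addO zO nO s t e c i} (Hg : @is_gpgd A O addA zA nA addO zO nO s t e c i) a :
  c (e (t a)) a = a. Proof. apply Hg. Qed.
Lemma gg_idr {A O addA zA nA addO zO nO s t e c i} (Hg : @is_gpgd A O addA zA nA addO zO nO s t e c i) a :
  c a (e (s a)) = a. Proof. apply Hg. Qed.
Lemma gg_si {A O addA zA nA addO zO nO s t e c i} (Hg : @is_gpgd A O addA zA nA addO zO nO s t e c i) a :
  s (i a) = t a. Proof. apply Hg. Qed.
Lemma gg_ti {A O addA zA nA addO zO nO s t e c i} (Hg : @is_gpgd A O addA zA nA addO zO nO s t e c i) a :
  t (i a) = s a. Proof. apply Hg. Qed.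
Lemma gg_il {A O addA zA nA addO zO nO s t e c i} (Hg : @is_gpgd A O addA zA nA addO zO nO s t e c i) a :
  c (i a) a = e (s a). Proof. apply Hg. Qed.
Lemma gg_shom {A O addA zA nA addO zO nO s t e c i} (Hg : @is_gpgd A O addA zA nA addO zO nO s t e c i) :
  is_ghom addA addO s. Proof. apply Hg. Qed.
Lemma gg_thom {A O addA zA nA addO zO nO s t e c i} (Hg : @is_gpgd A O addA zA nA addO zO nO s t e c i) :
  is_ghom addA addO t. Proof. apply Hg. Qed.
Lemma gg_ehom {A O addA zA nA addO zO nO s t e c i} (Hg : @is_gpgd A O addA zA nA addO zO nO s t e c i) :
  is_ghom addO addA e. Proof. apply Hg. Qed.
Lemma gg_ihom {A O addA zA nA addO zO nO s t e c i} (Hg : @is_gpgd A O addA zA nA addO zO nO s t e c i) :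
  is_ghom addA addA i. Proof. apply Hg. Qed.
Lemma gg_int {A O addA zA nA addO zO nO s t e c i} (Hg : @is_gpgd A O addA zA nA addO zO nO s t e c i) a b a1 b1 :
  t a = s b -> t a1 = s b1 -> c (addA b b1) (addA a a1) = addA (c b a) (c b1 a1).
Proof. apply Hg. Qed.

Lemma gg_s0 {A O addA zA nA addO zO nO s t e c i} (Hg : @is_gpgd A O addA zA nA addO zO nO s t e c i) :
  s zA = zO. Proof. exact (hom0 s (ggA Hg) (ggO Hg) (gg_shom Hg)). Qed.
Lemma gg_t0 {A O addA zA nA addO zO nO s t e c i} (Hg : @is_gpgd A O addA zA nA addO zO nO s t e c i) :
  t zA = zO. Proof. exact (hom0 t (ggA Hg) (ggO Hg) (gg_thom Hg)). Qed.
Lemma gg_e0 {A O addA zA nA addO zO nO s t e c i} (Hg : @is_gpgd A O addA zA nA addO zO nO s t e c i) :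
  e zO = zA. Proof. exact (hom0 e (ggO Hg) (ggA Hg) (gg_ehom Hg)). Qed.
Lemma gg_sn {A O addA zA nA addO zO nO s t e c i} (Hg : @is_gpgd A O addA zA nA addO zO nO s t e c i) x :
  s (nA x) = nO (s x). Proof. exact (homn s (ggA Hg) (ggO Hg) (gg_shom Hg) x). Qed.
Lemma gg_tn {A O addA zA nA addO zO nO s t e c i} (Hg : @is_gpgd A O addA zA nA addO zO nO s t e c i) x :
  t (nA x) = nO (t x). Proof. exact (homn t (ggA Hg) (ggO Hg) (gg_thom Hg) x). Qed.
Lemma gg_en {A O addA zA nA addO zO nO s t e c i} (Hg : @is_gpgd A O addA zA nA addO zO nO s t e c i) x :
  e (nO x) = nA (e x). Proof. exact (homn e (ggO Hg) (ggA Hg) (gg_ehom Hg) x). Qed.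

Lemma gg_cform {A O addA zA nA addO zO nO s t e c i} (Hg : @is_gpgd A O addA zA nA addO zO nO s t e c i) a b :
  t a = s b -> c b a = addA b (addA (nA (e (s b))) a).
Proof.
  intro E. pose proof (ggA Hg) as GA. pose proof (ggO Hg) as GO.
  assert (H1 : c b a = c (addA (addA b (nA (e (s b)))) (e (s b))) (addA zA a)).
  { gnorm GA. reflexivity. }
  rewrite H1, (gg_int Hg).
  - rewrite <- (gg_e0 Hg).
    assert (H2 : zO = s (addA b (nA (e (s b))))).
    { rewrite (gg_shom Hg), (gg_sn Hg), (gg_se Hg), (gnr GO). reflexivity. }
    rewrite H2 at 1. rewrite (gg_idr Hg). rewrite <- E, (gg_idl Hg). gnorm GA. reflexivity.
  - rewrite (gg_t0 Hg), (gg_shom Hg), (gg_sn Hg), (gg_se Hg), (gnr GO). reflexivity.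
  - rewrite (gg_se Hg). exact E.
Qed.

Lemma gg_iform {A O addA zA nA addO zO nO s t e c i} (Hg : @is_gpgd A O addA zA nA addO zO nO s t e c i) a :
  i a = addA (e (s a)) (addA (nA a) (e (t a))).
Proof.
  pose proof (ggA Hg) as GA.
  pose proof (gg_il Hg a) as E. rewrite (gg_cform Hg) in E by (rewrite (gg_si Hg); reflexivity).
  rewrite (gg_si Hg) in E. apply (gsolve_l GA) in E. rewrite E.
  gnorm GA. reflexivity.
Qed.

Lemma gg_comm {A O addA zA nA addO zO nO s t e c i} (Hg : @is_gpgd A O addA zA nA addO zO nO s t e c i) x y :
  s x = zO -> t y = zO -> addA x y = addA y x.
Proof.
  intros Hx Hy. pose proof (ggA Hg) as GA.
  assert (E1 : c (addA x zA) (addA zA y) = addA x y).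
  { rewrite (gg_int Hg).
    - rewrite <- (gg_e0 Hg). rewrite <- Hx at 1. rewrite (gg_idr Hg). rewrite <- Hy. rewrite (gg_idl Hg). reflexivity.
    - rewrite (gg_t0 Hg). auto.
    - rewrite (gg_s0 Hg). auto. }
  assert (E2 : c (addA zA x) (addA y zA) = addA y x).
  { rewrite (gg_int Hg).
    - rewrite <- (gg_e0 Hg). rewrite <- Hy at 1. rewrite (gg_idl Hg). rewrite <- Hx. rewrite (gg_idr Hg). reflexivity.
    - rewrite (gg_s0 Hg). auto.
    - rewrite (gg_t0 Hg). auto. }
  rewrite (g0r GA), (g0l GA) in E1. rewrite (g0r GA), (g0l GA) in E2. congruence.
Qed.

Lemma gg_c00 {A O addA zA nA addO zO nO s t e c i} (Hg : @is_gpgd A O addA zA nA addO zO nO s t e c i) :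
  c zA zA = zA.
Proof. rewrite <- (gg_e0 Hg). rewrite <- (gg_te Hg zO) at 1. apply (gg_idl Hg). Qed.

Lemma ggmor_inv {A O A' O'} {addA zA nA addO zO nO s t e c i} {addA' zA' nA' addO' zO' nO' s' t' e' c' i'}
  (Hg : @is_gpgd A O addA zA nA addO zO nO s t e c i)
  (Hg' : @is_gpgd A' O' addA' zA' nA' addO' zO' nO' s' t' e' c' i') fa fo :
  is_gg_mor addA addO s t e c addA' addO' s' t' e' c' fa fo -> forall a, fa (i a) = i' (fa a).
Proof.
  intros (F1 & F2 & F3 & F4 & F5 & F6) a.
  rewrite (gg_iform Hg), (gg_iform Hg'), !F1, (homn fa (ggA Hg) (ggA Hg') F1), !F5, F3, F4. reflexivity.
Qed.

Lemma ggmor_rev {A O A' O'} addA addO (s t : A -> O) e c addA' addO' (s' t' : A' -> O') e' c' fa fo fa' fo' :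
  is_gg_mor addA addO s t e c addA' addO' s' t' e' c' fa fo ->
  (forall a, fa' (fa a) = a) -> (forall a, fa (fa' a) = a) ->
  (forall x, fo' (fo x) = x) -> (forall x, fo (fo' x) = x) ->
  is_gg_mor addA' addO' s' t' e' c' addA addO s t e c fa' fo'.
Proof.
  intros (F1 & F2 & F3 & F4 & F5 & F6) K1 K2 K3 K4.
  split; [|split; [|split; [|split; [|split]]]].
  - intros x y. rewrite <- (K2 x), <- (K2 y), <- F1, !K1. reflexivity.
  - intros x y. rewrite <- (K4 x), <- (K4 y), <- F2, !K3. reflexivity.
  - intro a. replace (s' a) with (s' (fa (fa' a))) by (rewrite K2; reflexivity). rewrite F3, K3. reflexivity.
  - intro a. replace (t' a) with (t' (fa (fa' a))) by (rewrite K2; reflexivity). rewrite F4, K3. reflexivity.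
  - intro x. replace (e' x) with (e' (fo (fo' x))) by (rewrite K4; reflexivity). rewrite <- F5, K1. reflexivity.
  - intros a b E. replace (c' b a) with (c' (fa (fa' b)) (fa (fa' a))) by (rewrite !K2; reflexivity).
    rewrite <- F6, K1. reflexivity.
    rewrite <- (K2 a), <- (K2 b), F3, F4 in E. rewrite <- (K3 (t (fa' a))), E, K3. reflexivity.
Qed.

Lemma gpgd_transport {A O A' O'} {addA zA nA addO zO nO s t e c i}
  (addA' : A' -> A' -> A') zA' nA' (addO' : O' -> O' -> O') zO' nO' s' t' e' c' i'
  (f : A' -> A) (g : O' -> O) :
  @is_gpgd A O addA zA nA addO zO nO s t e c i ->
  (forall x y, f x = f y -> x = y) -> (forall x y, g x = g y -> x = y) ->
  (forall x y, f (addA' x y) = addA (f x) (f y)) -> f zA' = zA -> (forall x, f (nA' x) = nA (f x)) ->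
  (forall x y, g (addO' x y) = addO (g x) (g y)) -> g zO' = zO -> (forall x, g (nO' x) = nO (g x)) ->
  (forall a, g (s' a) = s (f a)) -> (forall a, g (t' a) = t (f a)) -> (forall x, f (e' x) = e (g x)) ->
  (forall a b, t' a = s' b -> f (c' b a) = c (f b) (f a)) -> (forall a, f (i' a) = i (f a)) ->
  @is_gpgd A' O' addA' zA' nA' addO' zO' nO' s' t' e' c' i'.
Proof.
  intros Hg fi gi fadd f0 fn gadd g0 gn fs ft fe fc fiv.
  pose proof (ggA Hg) as GA. pose proof (ggO Hg) as GO.
  assert (comp : forall a b, t' a = s' b -> t (f a) = s (f b)).
  { intros a b E. rewrite <- ft, <- fs, E. reflexivity. }
  split; [|split; [|split; [|split; [|split; [|split; [|split]]]]]].
  - split; [|split; [|split; [|split]]]; intros; apply fi;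
      rewrite ?fadd, ?f0, ?fn; [apply GA| apply GA | apply GA | apply GA | apply GA].
  - split; [|split; [|split; [|split]]]; intros; apply gi;
      rewrite ?gadd, ?g0, ?gn; [apply GO| apply GO | apply GO | apply GO | apply GO].
  - split; [|split; [|split; [|split; [|split; [|split; [|split; [|split]]]]]]].
    + intro x. apply gi. rewrite fs, fe, (gg_se Hg). reflexivity.
    + intro x. apply gi. rewrite ft, fe, (gg_te Hg). reflexivity.
    + intros a b E. pose proof (comp _ _ E) as E'. split; apply gi.
      * rewrite fs, (fc _ _ E), (gg_sc Hg _ _ E'), fs. reflexivity.
      * rewrite ft, (fc _ _ E), (gg_tc Hg _ _ E'), ft. reflexivity.
    + intros a b d E1 E2. apply fi.
      assert (E3 : t' (c' b a) = s' d).
      { apply gi. rewrite ft, (fc _ _ E1), (gg_tc Hg _ _ (comp _ _ E1)), <- ft, E2. reflexivity. }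
      assert (E4 : t' a = s' (c' d b)).
      { apply gi. rewrite fs, (fc _ _ E2), (gg_sc Hg _ _ (comp _ _ E2)), <- fs, E1. reflexivity. }
      rewrite (fc _ _ E3), (fc _ _ E1), (fc _ _ E4), (fc _ _ E2).
      pose proof (comp _ _ E1) as C1. pose proof (comp _ _ E2) as C2.
      destruct Hg as (_ & _ & (_ & _ & _ & Hass & _) & _). apply Hass; assumption.
    + intro a. apply fi. rewrite fc, fe, ft. apply (gg_idl Hg).
      apply gi. rewrite ft, fs, fe, (gg_se Hg), ft. reflexivity.
    + intro a. apply fi. rewrite fc, fe, fs. apply (gg_idr Hg).
      apply gi. rewrite ft, fe, (gg_te Hg). reflexivity.
    + intro a. split; apply gi.
      * rewrite fs, fiv, (gg_si Hg), ft. reflexivity.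
      * rewrite ft, fiv, (gg_ti Hg), fs. reflexivity.
    + intro a. apply fi. rewrite fc, fiv, fe, fs. apply (gg_il Hg).
      apply gi. rewrite fs, fiv, (gg_si Hg), ft. reflexivity.
    + intro a. apply fi. rewrite fc, fiv, fe, ft.
      destruct Hg as (_ & _ & (_ & _ & _ & _ & _ & _ & _ & _ & Hr) & _). apply Hr.
      apply gi. rewrite ft, fiv, (gg_ti Hg), fs. reflexivity.
  - intros x y. apply gi. rewrite gadd, !fs, fadd. apply (gg_shom Hg).
  - intros x y. apply gi. rewrite gadd, !ft, fadd. apply (gg_thom Hg).
  - intros x y. apply fi. rewrite fadd, !fe, gadd. apply (gg_ehom Hg).
  - intros x y. apply fi. rewrite fadd, !fiv, fadd. apply (gg_ihom Hg).
  - intros a b a1 b1 E1 E2. apply fi.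
    assert (E3 : t' (addA' a a1) = s' (addA' b b1)).
    { apply gi. rewrite ft, fs, !fadd, (gg_thom Hg), (gg_shom Hg), (comp _ _ E1), (comp _ _ E2). reflexivity. }
    rewrite (fc _ _ E3), !fadd, (fc _ _ E1), (fc _ _ E2). apply (gg_int Hg); apply comp; assumption.
Qed.

Lemma semidirect_gpgd {A B} (addA : A -> A -> A) zA nA (addB : B -> B -> B) zB nB
  (act : B -> A -> A) (bd : A -> B) (addS : A * B -> A * B -> A * B) zS nS :
  is_group addA zA nA -> is_group addB zB nB -> is_group addS zS nS ->
  (forall p q, addS p q = (addA (fst p) (act (snd p) (fst q)), addB (snd p) (snd q))) ->
  (forall b a a1, act b (addA a a1) = addA (act b a) (act b a1)) ->
  (forall b b1 a, act (addB b b1) a = act b (act b1 a)) ->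
  is_ghom addA addB bd ->
  (forall b a, bd (act b a) = addB (addB b (bd a)) (nB b)) ->
  (forall a a1, act (bd a) a1 = addA (addA a a1) (nA a)) ->
  is_gpgd addS zS nS addB zB nB (fun p => snd p) (fun p => addB (bd (fst p)) (snd p))
    (fun b => (zA, b)) (fun q p => (addA (fst q) (fst p), snd p))
    (fun p => (nA (fst p), addB (bd (fst p)) (snd p))).
Proof.
  intros GA GB GS HS Hact Hact2 Hbd X1 X2.
  assert (act0 : forall b, act b zA = zA) by (intro b; exact (hom0 (act b) GA GA (Hact b))).
  assert (actn : forall b a, act b (nA a) = nA (act b a)) by (intros b; exact (homn (act b) GA GA (Hact b))).
  assert (bd0 : bd zA = zB) by exact (hom0 bd GA GB Hbd).
  assert (bdn : forall a, bd (nA a) = nB (bd a)) by exact (homn bd GA GB Hbd).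
  assert (Ht : forall p q, addB (bd (fst (addS p q))) (snd (addS p q)) =
                 addB (addB (bd (fst p)) (snd p)) (addB (bd (fst q)) (snd q))).
  { intros [p1 p2] [q1 q2]. rewrite HS. simpl. rewrite Hbd, X1. gnorm GB. reflexivity. }
  split; [exact GS|split; [exact GB|split; [|split; [|split; [|split; [|split]]]]]].
  - split; [|split; [|split; [|split; [|split; [|split; [|split; [|split]]]]]]]; simpl.
    + reflexivity.
    + intro x. rewrite bd0, (g0l GB). reflexivity.
    + intros [a1 a2] [b1 b2]; simpl; intro E. split; [reflexivity|]. rewrite Hbd, <- E. gnorm GB. reflexivity.
    + intros [a1 a2] [b1 b2] [d1 d2]; simpl; intros. rewrite (gassoc GA). reflexivity.
    + intros [a1 a2]; simpl. rewrite (g0l GA). reflexivity.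
    + intros [a1 a2]; simpl. rewrite (g0r GA). reflexivity.
    + intros [a1 a2]; simpl. split; [reflexivity|]. rewrite bdn. gnorm GB. reflexivity.
    + intros [a1 a2]; simpl. rewrite (gnl GA). reflexivity.
    + intros [a1 a2]; simpl. rewrite (gnr GA). reflexivity.
  - intros p q. rewrite HS. reflexivity.
  - intros p q. apply Ht.
  - intros x y. rewrite HS. simpl. rewrite act0, (g0l GA). reflexivity.
  - intros [p1 p2] [q1 q2]. rewrite !HS. simpl.
    pose proof (Ht (p1, p2) (q1, q2)) as E. rewrite HS in E. simpl in E. rewrite E. f_equal.
    rewrite Hact2, X2, actn. gnorm GA. reflexivity.
  - intros [a1 a2] [b1 b2] [c1 c2] [d1 d2]; simpl; intros E1 E2. rewrite !HS. simpl. f_equal.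
    rewrite Hact. rewrite <- E1, Hact2, X2. gnorm GA. reflexivity.
Qed.

Set Implicit Arguments.

Definition sd_add (G H : GpGd) (act : Ar H -> Ar G -> Ar G) :=
  fun p q : Ar G * Ar H => (addA G (fst p) (act (snd p) (fst q)), addA H (snd p) (snd q)).
Definition sd_neg (G H : GpGd) (act : Ar H -> Ar G -> Ar G) :=
  fun p : Ar G * Ar H => (act (negA H (snd p)) (negA G (fst p)), negA H (snd p)).
Definition sd_src (G H : GpGd) := fun p : Ar G * Ar H => (src G (fst p), src H (snd p)).
Definition sd_tgt (G H : GpGd) := fun p : Ar G * Ar H => (tgt G (fst p), tgt H (snd p)).
Definition sd_idn (G H : GpGd) := fun x : Ob G * Ob H => (idn G (fst x), idn H (snd x)).
Definition sd_cmp (G H : GpGd) :=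
  fun q p : Ar G * Ar H => (cmp G (fst q) (fst p), cmp H (snd q) (snd p)).
Definition sd_inv (G H : GpGd) := fun p : Ar G * Ar H => (inv G (fst p), inv H (snd p)).

Definition SDGG (G H : GpGd) act addP zeroP negP :=
  is_gpgd (sd_add G H act) (zeroA G, zeroA H) (sd_neg G H act) addP zeroP negP
    (sd_src G H) (sd_tgt G H) (sd_idn G H) (sd_cmp G H) (sd_inv G H).

Definition oact (G H : GpGd) (act : Ar H -> Ar G -> Ar G) (y : Ob H) (x : Ob G) : Ob G :=
  src G (act (idn H y) (idn G x)).

Lemma sd_formula G H act addP zeroP negP : SDGG G H act addP zeroP negP ->
  forall x y x1 y1, addP (x, y) (x1, y1) = (addO G x (oact G H act y x1), addO H y y1).
Proof.
  intros Hs x y x1 y1. unfold SDGG in Hs.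
  pose proof (gg_shom Hs (idn G x, idn H y) (idn G x1, idn H y1)) as E.
  unfold sd_src, sd_add in E; simpl in E.
  rewrite !(gg_se (gpgd_ax G)), !(gg_se (gpgd_ax H)) in E. rewrite <- E.
  rewrite (gg_shom (gpgd_ax G)), (gg_shom (gpgd_ax H)), (gg_se (gpgd_ax G)), !(gg_se (gpgd_ax H)).
  reflexivity.
Qed.

Lemma sd_src_act G H act addP zeroP negP : SDGG G H act addP zeroP negP ->
  forall b a, src G (act b a) = oact G H act (src H b) (src G a).
Proof.
  intros Hs b a. pose proof (sd_formula Hs) as F. unfold SDGG in Hs.
  pose proof (gg_shom Hs (zeroA G, b) (a, zeroA H)) as E.
  unfold sd_src, sd_add in E; simpl in E. rewrite F in E.
  apply (f_equal fst) in E. simpl in E. rewrite (g0l (ggA (gpgd_ax G))), (gg_s0 (gpgd_ax G)), (g0l (ggO (gpgd_ax G))) in E.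
  exact E.
Qed.

Definition ch1 (X : XModGG) := constructive_indefinite_description _ (proj2 (proj2 (proj2 (xact_derived X)))).
Definition sd_addP X := proj1_sig (ch1 X).
Definition ch2 (X : XModGG) := constructive_indefinite_description _ (proj2_sig (ch1 X)).
Definition sd_zeroP X := proj1_sig (ch2 X).
Definition ch3 (X : XModGG) := constructive_indefinite_description _ (proj2_sig (ch2 X)).
Definition sd_negP X := proj1_sig (ch3 X).
Lemma sd_ax X : SDGG (XG X) (XH X) (xact X) (sd_addP X) (sd_zeroP X) (sd_negP X).
Proof. exact (proj2_sig (ch3 X)). Qed.

Definition sdSV (X : XModGG) : GpGd := MkGpGd (sd_ax X).

Lemma x_act0 X a : xact X (zeroA (XH X)) a = a. Proof. apply (xact_derived X). Qed.
Lemma x_actD X b b1 a : xact X (addA (XH X) b b1) a = xact X b (xact X b1 a). Proof. apply (xact_derived X). Qed.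
Lemma x_acth X b : is_ghom (addA (XG X)) (addA (XG X)) (xact X b). Proof. intros a a1. apply (xact_derived X). Qed.
Lemma x_actz X b : xact X b (zeroA (XG X)) = zeroA (XG X).
Proof. exact (hom0 _ (ggA (gpgd_ax _)) (ggA (gpgd_ax _)) (x_acth X b)). Qed.
Lemma x_actn X b a : xact X b (negA (XG X) a) = negA (XG X) (xact X b a).
Proof. exact (homn _ (ggA (gpgd_ax _)) (ggA (gpgd_ax _)) (x_acth X b) a). Qed.

Lemma bd1_hom X : is_ghom (addA (XG X)) (addA (XH X)) (bd1 X). Proof. apply (bd_mor X). Qed.
Lemma bd0_hom X : is_ghom (addO (XG X)) (addO (XH X)) (bd0 X). Proof. apply (bd_mor X). Qed.
Lemma bd1_src X a : src (XH X) (bd1 X a) = bd0 X (src (XG X) a). Proof. apply (bd_mor X). Qed.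
Lemma bd1_tgt X a : tgt (XH X) (bd1 X a) = bd0 X (tgt (XG X) a). Proof. apply (bd_mor X). Qed.
Lemma bd1_idn X x : bd1 X (idn (XG X) x) = idn (XH X) (bd0 X x). Proof. apply (bd_mor X). Qed.
Lemma bd1_cmp X a b : tgt (XG X) a = src (XG X) b -> bd1 X (cmp (XG X) b a) = cmp (XH X) (bd1 X b) (bd1 X a).
Proof. apply (bd_mor X). Qed.

Definition xoact X := oact (XG X) (XH X) (xact X).

Lemma oact_hom X y : is_ghom (addO (XG X)) (addO (XG X)) (xoact X y).
Proof. intros x x1. unfold xoact, oact. rewrite (gg_ehom (gpgd_ax (XG X))), (x_acth X), (gg_shom (gpgd_ax (XG X))).
  reflexivity. Qed.
Lemma oact_add X y y1 x : xoact X (addO (XH X) y y1) x = xoact X y (xoact X y1 x).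
Proof. unfold xoact, oact. rewrite (gg_ehom (gpgd_ax (XH X))), x_actD, (sd_src_act (sd_ax X)), (gg_se (gpgd_ax (XH X))).
  reflexivity. Qed.
Lemma oact_0 X x : xoact X (zeroO (XH X)) x = x.
Proof. unfold xoact, oact. rewrite (gg_e0 (gpgd_ax (XH X))), x_act0, (gg_se (gpgd_ax (XG X))). reflexivity. Qed.
Lemma oact_bd X y x : bd0 X (xoact X y x) = addO (XH X) (addO (XH X) y (bd0 X x)) (negO (XH X) y).
Proof. unfold xoact, oact. rewrite <- bd1_src, (xm1 X), !(gg_shom (gpgd_ax (XH X))), (gg_sn (gpgd_ax (XH X))),
  (gg_se (gpgd_ax (XH X))), bd1_src, (gg_se (gpgd_ax (XG X))). reflexivity. Qed.
Lemma oact_peif X x x1 : xoact X (bd0 X x) x1 = addO (XG X) (addO (XG X) x x1) (negO (XG X) x).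
Proof. unfold xoact, oact. rewrite <- bd1_idn, (xm2 X), !(gg_shom (gpgd_ax (XG X))), (gg_sn (gpgd_ax (XG X))),
  !(gg_se (gpgd_ax (XG X))). reflexivity. Qed.

Lemma addP_form X x y x1 y1 :
  sd_addP X (x, y) (x1, y1) = (addO (XG X) x (xoact X y x1), addO (XH X) y y1).
Proof. exact (sd_formula (sd_ax X) x y x1 y1). Qed.

Definition F_hs X := fun p : Ar (XG X) * Ar (XH X) => snd p.
Definition F_ht X := fun p : Ar (XG X) * Ar (XH X) => addA (XH X) (bd1 X (fst p)) (snd p).
Definition F_he X := fun b : Ar (XH X) => (zeroA (XG X), b).
Definition F_hc X := fun q p : Ar (XG X) * Ar (XH X) => (addA (XG X) (fst q) (fst p), snd p).
Definition F_hi X := fun p : Ar (XG X) * Ar (XH X) =>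
  (negA (XG X) (fst p), addA (XH X) (bd1 X (fst p)) (snd p)).
Definition F_os X := fun p : Ob (XG X) * Ob (XH X) => snd p.
Definition F_ot X := fun p : Ob (XG X) * Ob (XH X) => addO (XH X) (bd0 X (fst p)) (snd p).
Definition F_oe X := fun b : Ob (XH X) => (zeroO (XG X), b).
Definition F_oc X := fun q p : Ob (XG X) * Ob (XH X) => (addO (XG X) (fst q) (fst p), snd p).
Definition F_oi X := fun p : Ob (XG X) * Ob (XH X) =>
  (negO (XG X) (fst p), addO (XH X) (bd0 X (fst p)) (snd p)).

Lemma F_axSH X : is_gpgd (addA (sdSV X)) (zeroA (sdSV X)) (negA (sdSV X)) (addA (XH X)) (zeroA (XH X))
  (negA (XH X)) (F_hs X) (F_ht X) (F_he X) (F_hc X) (F_hi X).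
Proof.
  apply semidirect_gpgd with (act := xact X).
  - exact (ggA (gpgd_ax _)).
  - exact (ggA (gpgd_ax _)).
  - exact (ggA (sd_ax X)).
  - intros p q; reflexivity.
  - intros; apply x_acth.
  - intros; apply x_actD.
  - apply bd1_hom.
  - apply (xm1 X).
  - apply (xm2 X).
Qed.

Lemma F_axVP X : is_gpgd (addO (sdSV X)) (zeroO (sdSV X)) (negO (sdSV X)) (addO (XH X)) (zeroO (XH X))
  (negO (XH X)) (F_os X) (F_ot X) (F_oe X) (F_oc X) (F_oi X).
Proof.
  apply semidirect_gpgd with (act := xoact X).
  - exact (ggO (gpgd_ax _)).
  - exact (ggO (gpgd_ax _)).
  - exact (ggO (sd_ax X)).
  - intros [x y] [x1 y1]; apply addP_form.
  - intros; apply oact_hom.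
  - intros; apply oact_add.
  - apply bd0_hom.
  - apply oact_bd.
  - apply oact_peif.
Qed.

Ltac sdu := unfold sd_src, sd_tgt, sd_idn, sd_cmp, sd_add, sd_neg, sd_inv in *; simpl in *.

Lemma F_d0 X : is_gpgd_mor (sdSV X) (XH X) (F_hs X) (F_os X).
Proof.
  split; [|split; [|split; [|split; [|split]]]]; try (intros; reflexivity).
  - intros [x y] [x1 y1]. reflexivity.
  - intros [x y] [x1 y1]. simpl. rewrite addP_form. reflexivity.
Qed.

Lemma F_d1 X : is_gpgd_mor (sdSV X) (XH X) (F_ht X) (F_ot X).
Proof.
  pose proof (gpgd_ax (XG X)) as HG. pose proof (gpgd_ax (XH X)) as HH.
  split; [|split; [|split; [|split; [|split]]]].
  - exact (gg_thom (F_axSH X)).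
  - exact (gg_thom (F_axVP X)).
  - intros [a b]. unfold F_ht, F_ot; simpl; sdu. rewrite (gg_shom HH), bd1_src. reflexivity.
  - intros [a b]. unfold F_ht, F_ot; simpl; sdu. rewrite (gg_thom HH), bd1_tgt. reflexivity.
  - intros [x y]. unfold F_ht, F_ot; simpl; sdu. rewrite bd1_idn, (gg_ehom HH). reflexivity.
  - intros [a b] [a' b']. simpl. intro E. sdu. injection E as E1 E2.
    unfold F_ht; simpl. rewrite (bd1_cmp X _ _ E1). symmetry. apply (gg_int HH).
    + rewrite bd1_tgt, bd1_src, E1. reflexivity.
    + exact E2.
Qed.

Lemma F_eps X : is_gpgd_mor (XH X) (sdSV X) (F_he X) (F_oe X).
Proof.
  pose proof (gpgd_ax (XG X)) as HG. pose proof (gpgd_ax (XH X)) as HH.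
  split; [|split; [|split; [|split; [|split]]]].
  - exact (gg_ehom (F_axSH X)).
  - exact (gg_ehom (F_axVP X)).
  - intro b. unfold F_he, F_oe; simpl; sdu. rewrite (gg_s0 HG). reflexivity.
  - intro b. unfold F_he, F_oe; simpl; sdu. rewrite (gg_t0 HG). reflexivity.
  - intro y. unfold F_he, F_oe; simpl; sdu. rewrite (gg_e0 HG). reflexivity.
  - intros b b' E. unfold F_he; simpl; sdu. rewrite (gg_c00 HG). reflexivity.
Qed.

Lemma F_csrc X : forall u u', F_ht X u = F_hs X u' ->
  src (sdSV X) (F_hc X u' u) = F_oc X (src (sdSV X) u') (src (sdSV X) u).
Proof. intros [a b] [a' b'] _. simpl; sdu. unfold F_oc; simpl. rewrite (gg_shom (gpgd_ax (XG X))). reflexivity. Qed.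
Lemma F_ctgt X : forall u u', F_ht X u = F_hs X u' ->
  tgt (sdSV X) (F_hc X u' u) = F_oc X (tgt (sdSV X) u') (tgt (sdSV X) u).
Proof. intros [a b] [a' b'] _. simpl; sdu. unfold F_oc; simpl. rewrite (gg_thom (gpgd_ax (XG X))). reflexivity. Qed.
Lemma F_cidn X : forall v v', F_ot X v = F_os X v' ->
  F_hc X (idn (sdSV X) v') (idn (sdSV X) v) = idn (sdSV X) (F_oc X v' v).
Proof. intros [a b] [a' b'] _. simpl; sdu. unfold F_hc; simpl. rewrite (gg_ehom (gpgd_ax (XG X))). reflexivity. Qed.
Lemma F_inter X : forall u u' w w', F_ht X u = F_hs X u' -> F_ht X w = F_hs X w' ->
  tgt (sdSV X) u = src (sdSV X) w -> tgt (sdSV X) u' = src (sdSV X) w' ->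
  cmp (sdSV X) (F_hc X w' w) (F_hc X u' u) = F_hc X (cmp (sdSV X) w' u') (cmp (sdSV X) w u).
Proof.
  intros [a b] [a' b'] [c d] [c' d'] _ _ E1 E2. simpl in *; sdu.
  injection E1 as E1 _. injection E2 as E2 _. unfold F_hc; simpl.
  rewrite (gg_int (gpgd_ax (XG X))); auto.
Qed.

Definition F0 (X : XModGG) : DGG :=
  @MkDGG (sdSV X) (XH X) (F_hs X) (F_ht X) (F_he X) (F_hc X) (F_hi X)
    (F_os X) (F_ot X) (F_oe X) (F_oc X) (F_oi X) (F_axSH X) (F_axVP X)
    (F_d0 X) (F_d1 X) (F_eps X) (@F_csrc X) (@F_ctgt X) (@F_cidn X) (@F_inter X).

Unset Implicit Arguments.

Record SubSpec (G : GpGd) := MkSub {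
  sPA : Ar G -> Prop; sPO : Ob G -> Prop;
  cA_add : forall x y, sPA x -> sPA y -> sPA (addA G x y);
  cA_zero : sPA (zeroA G);
  cA_neg : forall x, sPA x -> sPA (negA G x);
  cO_add : forall x y, sPO x -> sPO y -> sPO (addO G x y);
  cO_zero : sPO (zeroO G);
  cO_neg : forall x, sPO x -> sPO (negO G x);
  c_src : forall a, sPA a -> sPO (src G a);
  c_tgt : forall a, sPA a -> sPO (tgt G a);
  c_idn : forall x, sPO x -> sPA (idn G x) }.
Arguments sPA {G} _ _.
Arguments sPO {G} _ _.


Definition s_add G (S : SubSpec G) (u v : {a | sPA S a}) : {a | sPA S a} :=
  exist _ (addA G (proj1_sig u) (proj1_sig v)) (@cA_add G S _ _ (proj2_sig u) (proj2_sig v)).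
Definition s_zero G (S : SubSpec G) : {a | sPA S a} := exist _ _ (@cA_zero G S).
Definition s_neg G (S : SubSpec G) (u : {a | sPA S a}) : {a | sPA S a} :=
  exist _ _ (@cA_neg G S _ (proj2_sig u)).
Definition s_addO G (S : SubSpec G) (u v : {a | sPO S a}) : {a | sPO S a} :=
  exist _ (addO G (proj1_sig u) (proj1_sig v)) (@cO_add G S _ _ (proj2_sig u) (proj2_sig v)).
Definition s_zeroO G (S : SubSpec G) : {a | sPO S a} := exist _ _ (@cO_zero G S).
Definition s_negO G (S : SubSpec G) (u : {a | sPO S a}) : {a | sPO S a} :=
  exist _ _ (@cO_neg G S _ (proj2_sig u)).
Definition s_src G (S : SubSpec G) (u : {a | sPA S a}) : {a | sPO S a} :=
  exist _ _ (@c_src G S _ (proj2_sig u)).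
Definition s_tgt G (S : SubSpec G) (u : {a | sPA S a}) : {a | sPO S a} :=
  exist _ _ (@c_tgt G S _ (proj2_sig u)).
Definition s_idn G (S : SubSpec G) (u : {a | sPO S a}) : {a | sPA S a} :=
  exist _ _ (@c_idn G S _ (proj2_sig u)).
Arguments s_add {G S} u v.
Arguments s_neg {G S} u.
Arguments s_addO {G S} u v.
Arguments s_negO {G S} u.
Arguments s_src {G S} u.
Arguments s_tgt {G S} u.
Arguments s_idn {G S} u.
Arguments s_zero {G} S.
Arguments s_zeroO {G} S.

Definition s_cmp G (S : SubSpec G) (v u : {a | sPA S a}) : {a | sPA S a} :=
  s_add v (s_add (s_neg (s_idn (s_src v))) u).
Definition s_inv G (S : SubSpec G) (u : {a | sPA S a}) : {a | sPA S a} :=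
  s_add (s_idn (s_src u)) (s_add (s_neg u) (s_idn (s_tgt u))).
Arguments s_cmp {G S} v u.
Arguments s_inv {G S} u.

Lemma s_cmp_val G (S : SubSpec G) (v u : {a | sPA S a}) :
  tgt G (proj1_sig u) = src G (proj1_sig v) ->
  proj1_sig (s_cmp v u) = cmp G (proj1_sig v) (proj1_sig u).
Proof. intro E. simpl. symmetry. apply (gg_cform (gpgd_ax G)). exact E. Qed.

Lemma s_inv_val G (S : SubSpec G) (u : {a | sPA S a}) :
  proj1_sig (s_inv u) = inv G (proj1_sig u).
Proof. simpl. symmetry. apply (gg_iform (gpgd_ax G)). Qed.

Lemma sub_ax G (S : SubSpec G) :
  is_gpgd (@s_add G S) (s_zero S) (@s_neg G S) (@s_addO G S) (s_zeroO S) (@s_negO G S)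
    (@s_src G S) (@s_tgt G S) (@s_idn G S) (@s_cmp G S) (@s_inv G S).
Proof.
  apply (gpgd_transport _ _ _ _ _ _ _ _ _ _ _ (@proj1_sig _ _) (@proj1_sig _ _) (gpgd_ax G));
    try (intros; reflexivity).
  - intros x y; apply sig_inj.
  - intros x y; apply sig_inj.
  - intros a b E. apply s_cmp_val. apply (f_equal (@proj1_sig _ _)) in E. exact E.
  - intros a. apply s_inv_val.
Qed.

Definition subGpGd G (S : SubSpec G) : GpGd := MkGpGd (sub_ax G S).

Lemma d0_src D u : src (HP D) (hs D u) = os D (src (SV D) u). Proof. apply (d0_mor D). Qed.
Lemma d0_tgt D u : tgt (HP D) (hs D u) = os D (tgt (SV D) u). Proof. apply (d0_mor D). Qed.
Lemma d0_idn D x : hs D (idn (SV D) x) = idn (HP D) (os D x). Proof. apply (d0_mor D). Qed.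
Lemma d0_cmp D a b : tgt (SV D) a = src (SV D) b -> hs D (cmp (SV D) b a) = cmp (HP D) (hs D b) (hs D a).
Proof. apply (d0_mor D). Qed.
Lemma d1_src D u : src (HP D) (ht D u) = ot D (src (SV D) u). Proof. apply (d1_mor D). Qed.
Lemma d1_tgt D u : tgt (HP D) (ht D u) = ot D (tgt (SV D) u). Proof. apply (d1_mor D). Qed.
Lemma d1_idn D x : ht D (idn (SV D) x) = idn (HP D) (ot D x). Proof. apply (d1_mor D). Qed.
Lemma d1_cmp D a b : tgt (SV D) a = src (SV D) b -> ht D (cmp (SV D) b a) = cmp (HP D) (ht D b) (ht D a).
Proof. apply (d1_mor D). Qed.
Lemma e_src D b : src (SV D) (he D b) = oe D (src (HP D) b). Proof. apply (eps_mor D). Qed.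
Lemma e_tgt D b : tgt (SV D) (he D b) = oe D (tgt (HP D) b). Proof. apply (eps_mor D). Qed.
Lemma e_idn D x : he D (idn (HP D) x) = idn (SV D) (oe D x). Proof. apply (eps_mor D). Qed.
Lemma e_cmp D a b : tgt (HP D) a = src (HP D) b -> he D (cmp (HP D) b a) = cmp (SV D) (he D b) (he D a).
Proof. apply (eps_mor D). Qed.
Lemma e_inv D b : he D (inv (HP D) b) = inv (SV D) (he D b).
Proof. exact (ggmor_inv (gpgd_ax (HP D)) (gpgd_ax (SV D)) _ _ (eps_mor D) b). Qed.

Definition kspec (D : DGG) : SubSpec (SV D).
Proof.
  refine (@MkSub (SV D) (fun u => hs D u = zeroA (HP D)) (fun v => os D v = zeroO (HP D)) _ _ _ _ _ _ _ _ _).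
  - intros x y H1 H2. rewrite (gg_shom (ax_SH D)), H1, H2. apply (g0l (ggA (gpgd_ax _))).
  - apply (gg_s0 (ax_SH D)).
  - intros x H1. rewrite (gg_sn (ax_SH D)), H1. apply (gn0 (ggA (gpgd_ax _))).
  - intros x y H1 H2. rewrite (gg_shom (ax_VP D)), H1, H2. apply (g0l (ggO (gpgd_ax _))).
  - apply (gg_s0 (ax_VP D)).
  - intros x H1. rewrite (gg_sn (ax_VP D)), H1. apply (gn0 (ggO (gpgd_ax _))).
  - intros a H1. rewrite <- d0_src, H1. apply (gg_s0 (gpgd_ax _)).
  - intros a H1. rewrite <- d0_tgt, H1. apply (gg_t0 (gpgd_ax _)).
  - intros x H1. rewrite d0_idn, H1. apply (gg_e0 (gpgd_ax _)).
Defined.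

Definition K (D : DGG) : GpGd := subGpGd (SV D) (kspec D).

Lemma G_act_pf D b u : hs D u = zeroA (HP D) ->
  hs D (addA (SV D) (he D b) (addA (SV D) u (negA (SV D) (he D b)))) = zeroA (HP D).
Proof.
  intro H1. rewrite !(gg_shom (ax_SH D)), (gg_sn (ax_SH D)), (gg_se (ax_SH D)), H1.
  pose proof (ggA (gpgd_ax (HP D))) as GH. gnorm GH. reflexivity.
Qed.

Definition G_act (D : DGG) (b : Ar (HP D)) (u : Ar (K D)) : Ar (K D) :=
  exist _ (addA (SV D) (he D b) (addA (SV D) (proj1_sig u) (negA (SV D) (he D b))))
    (G_act_pf D b (proj1_sig u) (proj2_sig u)).
Definition G_bd1 (D : DGG) (u : Ar (K D)) : Ar (HP D) := ht D (proj1_sig u).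
Definition G_bd0 (D : DGG) (v : Ob (K D)) : Ob (HP D) := ot D (proj1_sig v).

Definition G_psi D (p : Ob (K D) * Ob (HP D)) : Ob (SV D) :=
  addO (SV D) (proj1_sig (fst p)) (oe D (snd p)).
Lemma G_psiinv_pf D v : os D (addO (SV D) v (negO (SV D) (oe D (os D v)))) = zeroO (HP D).
Proof. rewrite (gg_shom (ax_VP D)), (gg_sn (ax_VP D)), (gg_se (ax_VP D)). apply (gnr (ggO (gpgd_ax _))). Qed.
Definition G_psiinv D (v : Ob (SV D)) : Ob (K D) * Ob (HP D) :=
  (exist _ (addO (SV D) v (negO (SV D) (oe D (os D v)))) (G_psiinv_pf D v), os D v).
Lemma psi_psiinv D v : G_psi D (G_psiinv D v) = v.
Proof. unfold G_psi, G_psiinv; simpl. pose proof (ggO (gpgd_ax (SV D))) as G. gnorm G. reflexivity. Qed.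
Lemma psi_inj D p q : G_psi D p = G_psi D q -> p = q.
Proof.
  destruct p as [[x px] y], q as [[x1 qx] y1]. unfold G_psi; simpl in *. intro E.
  assert (Ey : y = y1).
  { apply (f_equal (os D)) in E. rewrite !(gg_shom (ax_VP D)), !(gg_se (ax_VP D)), px, qx, !(g0l (ggO (gpgd_ax _))) in E.
    exact E. }
  subst y1. f_equal. apply sig_inj; simpl. exact (gcancel_r (ggO (gpgd_ax _)) _ _ _ E).
Qed.
Definition G_phi D (p : Ar (K D) * Ar (HP D)) : Ar (SV D) :=
  addA (SV D) (proj1_sig (fst p)) (he D (snd p)).
Lemma phi_inj D p q : G_phi D p = G_phi D q -> p = q.
Proof.
  destruct p as [[x px] y], q as [[x1 qx] y1]. unfold G_phi; simpl in *. intro E.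
  assert (Ey : y = y1).
  { apply (f_equal (hs D)) in E. rewrite !(gg_shom (ax_SH D)), !(gg_se (ax_SH D)), px, qx, !(g0l (ggA (gpgd_ax _))) in E.
    exact E. }
  subst y1. f_equal. apply sig_inj; simpl. exact (gcancel_r (ggA (gpgd_ax _)) _ _ _ E).
Qed.

Definition G_addP D p q := G_psiinv D (addO (SV D) (G_psi D p) (G_psi D q)).
Definition G_zeroP D := G_psiinv D (zeroO (SV D)).
Definition G_negP D p := G_psiinv D (negO (SV D) (G_psi D p)).

Ltac sdu ::= unfold sd_src, sd_tgt, sd_idn, sd_cmp, sd_add, sd_neg, sd_inv in *; simpl in *.

Lemma G_sd D : SDGG (K D) (HP D) (G_act D) (G_addP D) (G_zeroP D) (G_negP D).
Proof.
  pose proof (ggA (gpgd_ax (SV D))) as GA. pose proof (ggA (gpgd_ax (HP D))) as GH.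
  pose proof (gpgd_ax (SV D)) as HS.
  unfold SDGG.
  apply (gpgd_transport _ _ _ _ _ _ _ _ _ _ _ (G_phi D) (G_psi D) (gpgd_ax (SV D))).
  - apply phi_inj.
  - apply psi_inj.
  - intros [[x px] y] [[x1 px1] y1]. unfold G_phi; sdu. rewrite (gg_ehom (ax_SH D)). gnorm GA. reflexivity.
  - unfold G_phi; simpl. rewrite (gg_e0 (ax_SH D)). apply (g0l GA).
  - intros [[x px] y]. unfold G_phi; sdu. rewrite (gg_en (ax_SH D)). gnorm GA. reflexivity.
  - intros p q. unfold G_addP. apply psi_psiinv.
  - unfold G_zeroP. apply psi_psiinv.
  - intros p. unfold G_negP. apply psi_psiinv.
  - intros [[x px] y]. unfold G_phi, G_psi; sdu. rewrite (gg_shom HS), e_src. reflexivity.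
  - intros [[x px] y]. unfold G_phi, G_psi; sdu. rewrite (gg_thom HS), e_tgt. reflexivity.
  - intros [[x px] y]. unfold G_phi, G_psi; sdu. rewrite (gg_ehom HS), e_idn. reflexivity.
  - intros [[a pa] b] [[a1 pa1] b1]. sdu. intro E. injection E as E1 E2.
    unfold G_phi; simpl. rewrite <- (gg_cform HS _ _ E1).
    rewrite (e_cmp D _ _ E2). symmetry. apply (gg_int HS). exact E1.
    rewrite e_tgt, e_src, E2. reflexivity.
  - intros [[a pa] b]. unfold G_phi; sdu. rewrite e_inv, (gg_ihom HS).
    f_equal. symmetry. apply (gg_iform HS).
Qed.

Lemma G_derived D : is_derived_action (K D) (HP D) (G_act D).
Proof.
  pose proof (ggA (gpgd_ax (SV D))) as GA.
  split; [|split; [|split]].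
  - intros [a pa]. apply sig_inj; simpl. rewrite (gg_e0 (ax_SH D)). gnorm GA. reflexivity.
  - intros b b1 [a pa]. apply sig_inj; simpl. rewrite (gg_ehom (ax_SH D)). gnorm GA. reflexivity.
  - intros b [a pa] [a1 pa1]. apply sig_inj; simpl. gnorm GA. reflexivity.
  - exists (G_addP D), (G_zeroP D), (G_negP D). exact (G_sd D).
Qed.

Lemma G_bdmor D : is_gpgd_mor (K D) (HP D) (G_bd1 D) (G_bd0 D).
Proof.
  split; [|split; [|split; [|split; [|split]]]].
  - intros [a pa] [a1 pa1]. unfold G_bd1; simpl. apply (gg_thom (ax_SH D)).
  - intros [a pa] [a1 pa1]. unfold G_bd0; simpl. apply (gg_thom (ax_VP D)).
  - intros [a pa]. unfold G_bd1, G_bd0; simpl. apply d1_src.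
  - intros [a pa]. unfold G_bd1, G_bd0; simpl. apply d1_tgt.
  - intros [a pa]. unfold G_bd1, G_bd0; simpl. apply d1_idn.
  - intros [a pa] [b pb] E. injection E as E. unfold G_bd1.
    simpl. rewrite <- (gg_cform (gpgd_ax (SV D)) _ _ E). apply d1_cmp. exact E.
Qed.

Lemma G_xm1 D b a : G_bd1 D (G_act D b a) = addA (HP D) (addA (HP D) b (G_bd1 D a)) (negA (HP D) b).
Proof.
  destruct a as [a pa]. unfold G_bd1; simpl.
  rewrite !(gg_thom (ax_SH D)), (gg_tn (ax_SH D)), (gg_te (ax_SH D)).
  pose proof (ggA (gpgd_ax (HP D))) as GH. gnorm GH. reflexivity.
Qed.

Lemma G_xm2 D a a1 : G_act D (G_bd1 D a) a1 = addA (K D) (addA (K D) a a1) (negA (K D) a).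
Proof.
  pose proof (ggA (gpgd_ax (SV D))) as GA. pose proof (ggA (gpgd_ax (HP D))) as GH.
  destruct a as [a pa], a1 as [a1 pa1]. apply sig_inj. unfold G_bd1; simpl.
  set (e := he D (ht D a)).
  assert (Hw : ht D (addA (SV D) (negA (SV D) e) a) = zeroA (HP D)).
  { unfold e. rewrite (gg_thom (ax_SH D)), (gg_tn (ax_SH D)), (gg_te (ax_SH D)). apply (gnl GH). }
  pose proof (gg_comm (ax_SH D) a1 (addA (SV D) (negA (SV D) e) a) pa1 Hw) as Hc.
  apply (gcancel_r GA a). gnorm GA. gnorm GA. rewrite Hc. gnorm GA. reflexivity.
Qed.

Definition G0 (D : DGG) : XModGG :=
  @MkXModGG (K D) (HP D) (G_act D) (G_bd1 D) (G_bd0 D) (G_derived D) (G_bdmor D) (G_xm1 D) (G_xm2 D).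

Set Implicit Arguments.

Ltac sdu ::= simpl in *; unfold sd_src, sd_tgt, sd_idn, sd_cmp, sd_add, sd_neg, sd_inv in *; simpl in *.

Lemma m_hom G H fa fo : is_gpgd_mor G H fa fo -> is_ghom (addA G) (addA H) fa. Proof. intro M; apply M. Qed.
Lemma m_homO G H fa fo : is_gpgd_mor G H fa fo -> is_ghom (addO G) (addO H) fo. Proof. intro M; apply M. Qed.
Lemma m_src G H fa fo : is_gpgd_mor G H fa fo -> forall a, src H (fa a) = fo (src G a). Proof. intro M; apply M. Qed.
Lemma m_tgt G H fa fo : is_gpgd_mor G H fa fo -> forall a, tgt H (fa a) = fo (tgt G a). Proof. intro M; apply M. Qed.
Lemma m_idn G H fa fo : is_gpgd_mor G H fa fo -> forall x, fa (idn G x) = idn H (fo x). Proof. intro M; apply M. Qed.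
Lemma m_cmp G H fa fo : is_gpgd_mor G H fa fo -> forall a b, tgt G a = src G b -> fa (cmp G b a) = cmp H (fa b) (fa a).
Proof. intro M; apply M. Qed.
Lemma m_inv G H fa fo : is_gpgd_mor G H fa fo -> forall a, fa (inv G a) = inv H (fa a).
Proof. intro M. exact (ggmor_inv (gpgd_ax G) (gpgd_ax H) _ _ M). Qed.
Lemma m_zero G H fa fo : is_gpgd_mor G H fa fo -> fa (zeroA G) = zeroA H.
Proof. intro M. exact (hom0 fa (ggA (gpgd_ax _)) (ggA (gpgd_ax _)) (m_hom M)). Qed.
Lemma m_neg G H fa fo : is_gpgd_mor G H fa fo -> forall a, fa (negA G a) = negA H (fa a).
Proof. intro M. exact (homn fa (ggA (gpgd_ax _)) (ggA (gpgd_ax _)) (m_hom M)). Qed.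
Lemma m_zeroO G H fa fo : is_gpgd_mor G H fa fo -> fo (zeroO G) = zeroO H.
Proof. intro M. exact (hom0 fo (ggO (gpgd_ax _)) (ggO (gpgd_ax _)) (m_homO M)). Qed.
Lemma m_negO G H fa fo : is_gpgd_mor G H fa fo -> forall a, fo (negO G a) = negO H (fo a).
Proof. intro M. exact (homn fo (ggO (gpgd_ax _)) (ggO (gpgd_ax _)) (m_homO M)). Qed.

Lemma hfo_oact X Y (f : XHom X Y) y x : hfo f (xoact X y x) = xoact Y (hgo f y) (hfo f x).
Proof.
  unfold xoact, oact. rewrite <- (m_src (hf_mor f)), (h_act f), (m_idn (hf_mor f)), (m_idn (hg_mor f)). reflexivity.
Qed.

Definition F1_fs X Y (f : XHom X Y) := fun p : Ar (XG X) * Ar (XH X) => (hfa f (fst p), hga f (snd p)).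
Definition F1_fv X Y (f : XHom X Y) := fun p : Ob (XG X) * Ob (XH X) => (hfo f (fst p), hgo f (snd p)).

Ltac fu := simpl; unfold F1_fs, F1_fv, F_hs, F_ht, F_he, F_hc, F_hi, F_os, F_ot, F_oe, F_oc, F_oi in *; simpl in *.

Lemma F1_mor X Y (f : XHom X Y) : is_dgg_mor (F0 X) (F0 Y) (F1_fs f) (hga f) (F1_fv f) (hgo f).
Proof.
  pose proof (hf_mor f) as MF. pose proof (hg_mor f) as MG.
  assert (Hs : is_ghom (addA (sdSV X)) (addA (sdSV Y)) (F1_fs f)).
  { intros [a b] [a1 b1]. unfold F1_fs; sdu. rewrite (m_hom MF), (m_hom MG), (h_act f). reflexivity. }
  assert (Hv : is_ghom (addO (sdSV X)) (addO (sdSV Y)) (F1_fv f)).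
  { intros [a b] [a1 b1]. fu. rewrite !addP_form. simpl.
    rewrite (m_homO MF), (m_homO MG), hfo_oact. reflexivity. }
  split; [|split; [|split; [|split; [|split; [|split; [|split]]]]]].
  - split; [exact Hs|split; [exact Hv|split; [|split; [|split]]]].
    + intros [a b]. unfold F1_fs, F1_fv; sdu. rewrite (m_src MF), (m_src MG). reflexivity.
    + intros [a b]. unfold F1_fs, F1_fv; sdu. rewrite (m_tgt MF), (m_tgt MG). reflexivity.
    + intros [a b]. unfold F1_fs, F1_fv; sdu. rewrite (m_idn MF), (m_idn MG). reflexivity.
    + intros [a b] [a1 b1] E. unfold F1_fs; sdu. injection E as E1 E2.
      rewrite (m_cmp MF _ _ E1), (m_cmp MG _ _ E2). reflexivity.
  - intros [a b]. unfold F1_fs; sdu. rewrite (m_inv MF), (m_inv MG). reflexivity.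
  - exact MG.
  - apply (m_inv MG).
  - split; [exact Hs|split; [exact (m_hom MG)|split; [|split; [|split]]]].
    + intros [a b]. reflexivity.
    + intros [a b]. fu. rewrite (m_hom MG), (h_comm1 f). reflexivity.
    + intros b. fu. rewrite (m_zero MF). reflexivity.
    + intros [a b] [a1 b1] E. fu. rewrite (m_hom MF). reflexivity.
  - intros [a b]. fu. rewrite (m_neg MF), (m_hom MG), (h_comm1 f). reflexivity.
  - split; [exact Hv|split; [exact (m_homO MG)|split; [|split; [|split]]]].
    + intros [a b]. reflexivity.
    + intros [a b]. fu. rewrite (m_homO MG), (h_comm0 f). reflexivity.
    + intros b. fu. rewrite (m_zeroO MF). reflexivity.
    + intros [a b] [a1 b1] E. fu. rewrite (m_homO MF). reflexivity.
  - intros [a b]. fu. rewrite (m_negO MF), (m_homO MG), (h_comm0 f). reflexivity.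
Qed.

Definition F1 (X Y : XModGG) (f : XHom X Y) : DHom (F0 X) (F0 Y) := MkDHom (F1_mor f).

Lemma dm_SV D E (f : DHom D E) : is_gpgd_mor (SV D) (SV E) (dfs f) (dfv f). Proof. apply (dmor f). Qed.
Lemma dm_HP D E (f : DHom D E) : is_gpgd_mor (HP D) (HP E) (dfh f) (dfp f). Proof. apply (dmor f). Qed.
Lemma dm_hs D E (f : DHom D E) a : hs E (dfs f a) = dfh f (hs D a). Proof. apply (dmor f). Qed.
Lemma dm_ht D E (f : DHom D E) a : ht E (dfs f a) = dfh f (ht D a). Proof. apply (dmor f). Qed.
Lemma dm_he D E (f : DHom D E) b : dfs f (he D b) = he E (dfh f b). Proof. apply (dmor f). Qed.
Lemma dm_os D E (f : DHom D E) a : os E (dfv f a) = dfp f (os D a). Proof. apply (dmor f). Qed.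
Lemma dm_ot D E (f : DHom D E) a : ot E (dfv f a) = dfp f (ot D a). Proof. apply (dmor f). Qed.
Lemma dm_oe D E (f : DHom D E) b : dfv f (oe D b) = oe E (dfp f b). Proof. apply (dmor f). Qed.

Lemma G1a_pf D E (f : DHom D E) (u : Ar (K D)) : hs E (dfs f (proj1_sig u)) = zeroA (HP E).
Proof. rewrite dm_hs, (proj2_sig u). exact (m_zero (dm_HP f)). Qed.
Lemma G1o_pf D E (f : DHom D E) (u : Ob (K D)) : os E (dfv f (proj1_sig u)) = zeroO (HP E).
Proof. rewrite dm_os, (proj2_sig u). exact (m_zeroO (dm_HP f)). Qed.
Definition G1a D E (f : DHom D E) (u : Ar (K D)) : Ar (K E) := exist _ _ (G1a_pf f u).
Definition G1o D E (f : DHom D E) (u : Ob (K D)) : Ob (K E) := exist _ _ (G1o_pf f u).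

Lemma G1_fmor D E (f : DHom D E) : is_gpgd_mor (K D) (K E) (G1a f) (G1o f).
Proof.
  pose proof (dm_SV f) as M.
  split; [|split; [|split; [|split; [|split]]]].
  - intros u v. apply sig_inj. simpl. apply (m_hom M).
  - intros u v. apply sig_inj. simpl. apply (m_homO M).
  - intros u. apply sig_inj. simpl. apply (m_src M).
  - intros u. apply sig_inj. simpl. apply (m_tgt M).
  - intros u. apply sig_inj. simpl. apply (m_idn M).
  - intros u v _. apply sig_inj. simpl. rewrite !(m_hom M), (m_neg M), (m_idn M), (m_src M). reflexivity.
Qed.

Lemma G1_mor_act D E (f : DHom D E) b a : G1a f (G_act D b a) = G_act E (dfh f b) (G1a f a).
Proof. apply sig_inj. simpl. rewrite !(m_hom (dm_SV f)), (m_neg (dm_SV f)), dm_he. reflexivity. Qed.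

Definition G1 (D E : DGG) (f : DHom D E) : XHom (G0 D) (G0 E) :=
  @MkXHom (G0 D) (G0 E) (G1a f) (G1o f) (dfh f) (dfp f) (G1_fmor f) (dm_HP f)
    (fun a => eq_sym (dm_ht f (proj1_sig a))) (fun x => eq_sym (dm_ot f (proj1_sig x)))
    (G1_mor_act f).

Ltac sdu ::= simpl in *; unfold sd_src, sd_tgt, sd_idn, sd_cmp, sd_add, sd_neg, sd_inv in *; simpl in *.
Ltac fu ::= simpl; unfold F1_fs, F1_fv, F_hs, F_ht, F_he, F_hc, F_hi, F_os, F_ot, F_oe, F_oc, F_oi in *; simpl in *.

Definition eta_a X (a : Ar (XG X)) : Ar (XG (G0 (F0 X))) := exist _ (a, zeroA (XH X)) eq_refl.
Definition eta_o X (x : Ob (XG X)) : Ob (XG (G0 (F0 X))) := exist _ (x, zeroO (XH X)) eq_refl.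

Lemma eta_fmor X : is_gpgd_mor (XG X) (XG (G0 (F0 X))) (@eta_a X) (@eta_o X).
Proof.
  pose proof (gpgd_ax (XG X)) as HG. pose proof (gpgd_ax (XH X)) as HH.
  split; [|split; [|split; [|split; [|split]]]].
  - intros a a1. apply sig_inj. sdu. rewrite x_act0, (g0l (ggA HH)). reflexivity.
  - intros a a1. apply sig_inj. simpl. rewrite addP_form, oact_0, (g0l (ggO HH)). reflexivity.
  - intros a. apply sig_inj. sdu. rewrite (gg_s0 HH). reflexivity.
  - intros a. apply sig_inj. sdu. rewrite (gg_t0 HH). reflexivity.
  - intros a. apply sig_inj. sdu. rewrite (gg_e0 HH). reflexivity.
  - intros a b E. apply sig_inj.
    assert (E' : tgt (sdSV X) (a, zeroA (XH X)) = src (sdSV X) (b, zeroA (XH X))).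
    { sdu. rewrite E, (gg_t0 HH), (gg_s0 HH). reflexivity. }
    transitivity (cmp (sdSV X) (b, zeroA (XH X)) (a, zeroA (XH X))).
    + sdu. rewrite (gg_c00 HH). reflexivity.
    + symmetry. exact (s_cmp_val (sdSV X) (kspec (F0 X)) (eta_a X b) (eta_a X a) E').
Qed.

Lemma eta_act X b a : eta_a X (xact X b a) = xact (G0 (F0 X)) b (eta_a X a).
Proof.
  pose proof (gpgd_ax (XG X)) as HG. pose proof (gpgd_ax (XH X)) as HH.
  apply sig_inj. sdu. fu. unfold sd_add, sd_neg; simpl.
  rewrite (gn0 (ggA HG)), x_actz, x_act0, (g0l (ggA HG)), (g0l (ggA HH)), (g0r (ggA HG)),
    (gnr (ggA HH)). reflexivity.
Qed.

Lemma eta_c1 X a : bd1 (G0 (F0 X)) (eta_a X a) = bd1 X a.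
Proof. simpl. unfold G_bd1; fu. apply (g0r (ggA (gpgd_ax _))). Qed.
Lemma eta_c0 X x : bd0 (G0 (F0 X)) (eta_o X x) = bd0 X x.
Proof. simpl. unfold G_bd0; fu. apply (g0r (ggO (gpgd_ax _))). Qed.

Definition eta X : XHom X (G0 (F0 X)) :=
  @MkXHom X (G0 (F0 X)) (@eta_a X) (@eta_o X) (fun b => b) (fun y => y) (eta_fmor X)
    (is_gg_mor_id _ _ _ _ _ _) (fun a => eq_sym (eta_c1 X a)) (fun x => eq_sym (eta_c0 X x)) (@eta_act X).

Ltac sdu ::= simpl in *; unfold sd_src, sd_tgt, sd_idn, sd_cmp, sd_add, sd_neg, sd_inv in *; simpl in *.
Ltac fu ::= simpl; unfold F1_fs, F1_fv, F_hs, F_ht, F_he, F_hc, F_hi, F_os, F_ot, F_oe, F_oc, F_oi in *; simpl in *.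

Definition xhom_rev X Y (f : XHom X Y) (fa' : Ar (XG Y) -> Ar (XG X)) (fo' : Ob (XG Y) -> Ob (XG X))
  (ga' : Ar (XH Y) -> Ar (XH X)) (go' : Ob (XH Y) -> Ob (XH X))
  (K1 : forall a, fa' (hfa f a) = a) (K2 : forall a, hfa f (fa' a) = a)
  (K3 : forall x, fo' (hfo f x) = x) (K4 : forall x, hfo f (fo' x) = x)
  (K5 : forall a, ga' (hga f a) = a) (K6 : forall a, hga f (ga' a) = a)
  (K7 : forall x, go' (hgo f x) = x) (K8 : forall x, hgo f (go' x) = x) : XHom Y X.
Proof.
  refine (@MkXHom Y X fa' fo' ga' go' _ _ _ _ _).
  - exact (ggmor_rev _ _ _ _ _ _ _ _ _ _ _ _ _ _ _ _ (hf_mor f) K1 K2 K3 K4).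
  - exact (ggmor_rev _ _ _ _ _ _ _ _ _ _ _ _ _ _ _ _ (hg_mor f) K5 K6 K7 K8).
  - intro a. rewrite <- (K2 a) at 1. rewrite <- (h_comm1 f), K5. reflexivity.
  - intro x. rewrite <- (K4 x) at 1. rewrite <- (h_comm0 f), K7. reflexivity.
  - intros b a. rewrite <- (K2 a) at 1. rewrite <- (K6 b) at 1. rewrite <- (h_act f), K1. reflexivity.
Defined.

Lemma eta_K2 X (u : Ar (XG (G0 (F0 X)))) : eta_a X (fst (proj1_sig u)) = u.
Proof. destruct u as [[a b] pb]. apply sig_inj. simpl in *. unfold F_hs in pb. simpl in pb. rewrite pb. reflexivity. Qed.
Lemma eta_K4 X (u : Ob (XG (G0 (F0 X)))) : eta_o X (fst (proj1_sig u)) = u.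
Proof. destruct u as [[a b] pb]. apply sig_inj. simpl in *. unfold F_os in pb. simpl in pb. rewrite pb. reflexivity. Qed.

Definition eta_inv X : XHom (G0 (F0 X)) X :=
  @xhom_rev X (G0 (F0 X)) (eta X) (fun u => fst (proj1_sig u)) (fun u => fst (proj1_sig u))
    (fun b => b) (fun y => y) (fun a => eq_refl) (@eta_K2 X) (fun a => eq_refl) (@eta_K4 X)
    (fun a => eq_refl) (fun a => eq_refl) (fun a => eq_refl) (fun a => eq_refl).

Lemma dgg_rev D E fs fh fv fp fs' fh' fv' fp' :
  is_dgg_mor D E fs fh fv fp ->
  (forall a, fs' (fs a) = a) -> (forall a, fs (fs' a) = a) ->
  (forall a, fh' (fh a) = a) -> (forall a, fh (fh' a) = a) ->
  (forall a, fv' (fv a) = a) -> (forall a, fv (fv' a) = a) ->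
  (forall a, fp' (fp a) = a) -> (forall a, fp (fp' a) = a) ->
  is_dgg_mor E D fs' fh' fv' fp'.
Proof.
  intros (M1 & M2 & M3 & M4 & M5 & M6 & M7 & M8) K1 K2 K3 K4 K5 K6 K7 K8.
  split; [|split; [|split; [|split; [|split; [|split; [|split]]]]]].
  - exact (ggmor_rev _ _ _ _ _ _ _ _ _ _ _ _ _ _ _ _ M1 K1 K2 K5 K6).
  - intro a. rewrite <- (K2 a) at 1. rewrite <- M2, K1. reflexivity.
  - exact (ggmor_rev _ _ _ _ _ _ _ _ _ _ _ _ _ _ _ _ M3 K3 K4 K7 K8).
  - intro a. rewrite <- (K4 a) at 1. rewrite <- M4, K3. reflexivity.
  - exact (ggmor_rev _ _ _ _ _ _ _ _ _ _ _ _ _ _ _ _ M5 K1 K2 K3 K4).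
  - intro a. rewrite <- (K2 a) at 1. rewrite <- M6, K1. reflexivity.
  - exact (ggmor_rev _ _ _ _ _ _ _ _ _ _ _ _ _ _ _ _ M7 K5 K6 K7 K8).
  - intro a. rewrite <- (K6 a) at 1. rewrite <- M8, K5. reflexivity.
Qed.

Lemma phi_add D p q : G_phi D (addA (sdSV (G0 D)) p q) = addA (SV D) (G_phi D p) (G_phi D q).
Proof.
  pose proof (ggA (gpgd_ax (SV D))) as GA.
  destruct p as [[x px] y], q as [[x1 px1] y1]. unfold G_phi; sdu. rewrite (gg_ehom (ax_SH D)). gnorm GA. reflexivity.
Qed.

Lemma oact_G0 D y x : proj1_sig (xoact (G0 D) y x) =
  addO (SV D) (oe D y) (addO (SV D) (proj1_sig x) (negO (SV D) (oe D y))).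
Proof.
  destruct x as [x px]. unfold xoact, oact. simpl.
  rewrite !(gg_shom (gpgd_ax (SV D))), (gg_sn (gpgd_ax (SV D))), e_src, (gg_se (gpgd_ax (SV D))),
    (gg_se (gpgd_ax (HP D))). reflexivity.
Qed.

Lemma psi_add D p q : G_psi D (addO (sdSV (G0 D)) p q) = addO (SV D) (G_psi D p) (G_psi D q).
Proof.
  pose proof (ggO (gpgd_ax (SV D))) as GO.
  destruct p as [x y], q as [x1 y1]. simpl. rewrite addP_form. unfold G_psi; simpl.
  rewrite !(gg_shom (gpgd_ax (SV D))), (gg_sn (gpgd_ax (SV D))), e_src, !(gg_se (gpgd_ax (SV D))), (gg_se (gpgd_ax (HP D))), (gg_ehom (ax_VP D)). gnorm GO. reflexivity.
Qed.

Lemma eps_mor D : is_dgg_mor (F0 (G0 D)) D (G_phi D) (fun b => b) (G_psi D) (fun y => y).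
Proof.
  pose proof (ggA (gpgd_ax (SV D))) as GA. pose proof (ggO (gpgd_ax (SV D))) as GO.
  pose proof (gpgd_ax (SV D)) as HS.
  split; [|split; [|split; [|split; [|split; [|split; [|split]]]]]].
  - split; [exact (@phi_add D)|split; [exact (@psi_add D)|split; [|split; [|split]]]].
    + intros [[x px] y]. unfold G_phi, G_psi; sdu. rewrite (gg_shom HS), e_src. reflexivity.
    + intros [[x px] y]. unfold G_phi, G_psi; sdu. rewrite (gg_thom HS), e_tgt. reflexivity.
    + intros [[x px] y]. unfold G_phi, G_psi; sdu. rewrite (gg_ehom HS), e_idn. reflexivity.
    + intros [[a pa] b] [[a1 pa1] b1]. sdu. intro E. injection E as E1 E2.
      unfold G_phi; simpl. rewrite <- (gg_cform HS _ _ E1).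
      rewrite (e_cmp D _ _ E2). symmetry. apply (gg_int HS). exact E1.
      rewrite e_tgt, e_src, E2. reflexivity.
  - intros [[a pa] b]. unfold G_phi; sdu. rewrite e_inv, (gg_ihom HS).
    f_equal. symmetry. apply (gg_iform HS).
  - apply is_gg_mor_id.
  - reflexivity.
  - split; [exact (@phi_add D)|split; [intros x y; reflexivity|split; [|split; [|split]]]].
    + intros [[x px] y]. unfold G_phi; fu. rewrite (gg_shom (ax_SH D)), (gg_se (ax_SH D)), px.
      apply (g0l (ggA (gpgd_ax _))).
    + intros [[x px] y]. unfold G_phi; fu; unfold G_bd1; simpl. rewrite (gg_thom (ax_SH D)), (gg_te (ax_SH D)). reflexivity.
    + intros y. unfold G_phi; fu. apply (g0l GA).
    + intros [[x px] y] [[x1 px1] y1]. unfold G_phi; fu; unfold G_bd1; simpl. intro E.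
      rewrite (gg_cform (ax_SH D)).
      * rewrite (gg_shom (ax_SH D)), (gg_se (ax_SH D)), px1, (g0l (ggA (gpgd_ax _))). gnorm GA. reflexivity.
      * rewrite (gg_thom (ax_SH D)), (gg_shom (ax_SH D)), (gg_te (ax_SH D)), (gg_se (ax_SH D)), px1,
          (g0l (ggA (gpgd_ax _))). exact E.
  - intros [[x px] y]. unfold G_phi; fu; unfold G_bd1; simpl. rewrite (gg_iform (ax_SH D)).
    rewrite (gg_shom (ax_SH D)), (gg_se (ax_SH D)), px, (g0l (ggA (gpgd_ax _))).
    rewrite (gg_thom (ax_SH D)), (gg_te (ax_SH D)), (gg_ehom (ax_SH D)). gnorm GA. reflexivity.
  - split; [exact (@psi_add D)|split; [intros x y; reflexivity|split; [|split; [|split]]]].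
    + intros [[x px] y]. unfold G_psi; fu. rewrite (gg_shom (ax_VP D)), (gg_se (ax_VP D)), px.
      apply (g0l (ggO (gpgd_ax _))).
    + intros [[x px] y]. unfold G_psi; fu; unfold G_bd0; simpl. rewrite (gg_thom (ax_VP D)), (gg_te (ax_VP D)). reflexivity.
    + intros y. unfold G_psi; fu. apply (g0l GO).
    + intros [[x px] y] [[x1 px1] y1]. unfold G_psi; fu; unfold G_bd0; simpl. intro E.
      rewrite (gg_cform (ax_VP D)).
      * rewrite (gg_shom (ax_VP D)), (gg_se (ax_VP D)), px1, (g0l (ggO (gpgd_ax _))). gnorm GO. reflexivity.
      * rewrite (gg_thom (ax_VP D)), (gg_shom (ax_VP D)), (gg_te (ax_VP D)), (gg_se (ax_VP D)), px1,
          (g0l (ggO (gpgd_ax _))). exact E.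
  - intros [[x px] y]. unfold G_psi; fu; unfold G_bd0; simpl. rewrite (gg_iform (ax_VP D)).
    rewrite (gg_shom (ax_VP D)), (gg_se (ax_VP D)), px, (g0l (ggO (gpgd_ax _))).
    rewrite (gg_thom (ax_VP D)), (gg_te (ax_VP D)), (gg_ehom (ax_VP D)). gnorm GO. reflexivity.
Qed.

Definition eps D : DHom (F0 (G0 D)) D := MkDHom (eps_mor D).

Lemma G_phiinv_pf D u : hs D (addA (SV D) u (negA (SV D) (he D (hs D u)))) = zeroA (HP D).
Proof. rewrite (gg_shom (ax_SH D)), (gg_sn (ax_SH D)), (gg_se (ax_SH D)). apply (gnr (ggA (gpgd_ax _))). Qed.
Definition G_phiinv D (u : Ar (SV D)) : Ar (K D) * Ar (HP D) :=
  (exist _ (addA (SV D) u (negA (SV D) (he D (hs D u)))) (G_phiinv_pf D u), hs D u).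
Lemma phi_phiinv D u : G_phi D (G_phiinv D u) = u.
Proof. unfold G_phi, G_phiinv; simpl. pose proof (ggA (gpgd_ax (SV D))) as G. gnorm G. reflexivity. Qed.
Lemma phiinv_phi D p : G_phiinv D (G_phi D p) = p.
Proof. apply phi_inj. apply phi_phiinv. Qed.
Lemma psiinv_psi D p : G_psiinv D (G_psi D p) = p.
Proof. apply psi_inj. apply psi_psiinv. Qed.

Definition eps_inv D : DHom D (F0 (G0 D)) :=
  MkDHom (@dgg_rev (F0 (G0 D)) D (G_phi D) (fun b => b) (G_psi D) (fun y => y) (@G_phiinv D) (fun b => b) (@G_psiinv D) (fun y => y) (eps_mor D) (@phiinv_phi D) (@phi_phiinv D) (fun a => eq_refl) (fun a => eq_refl)
    (@psiinv_psi D) (@psi_psiinv D) (fun a => eq_refl) (fun a => eq_refl)).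

Theorem mainTheorem1 : cat_equivalent XModGpGd DblGpGd.
Proof.
  exists F0, F1, G0, G1.
  split; [|split; [|split]].
  - split; [|split].
    + intros X Y f g (E1 & E2 & E3 & E4). simpl.
      split; [|split; [|split]]; intros; simpl; unfold F1_fs, F1_fv; rewrite ?E1, ?E2, ?E3, ?E4; reflexivity.
    + intros X. simpl. split; [|split; [|split]]; intros [] || intros; reflexivity.
    + intros X Y Z g f. simpl. split; [|split; [|split]]; intros; reflexivity.
  - split; [|split].
    + intros D E f g (E1 & E2 & E3 & E4). simpl.
      split; [|split; [|split]]; intros; simpl; try (apply sig_inj; simpl); auto.
    + intros D. simpl. split; [|split; [|split]]; intros; try (apply sig_inj); reflexivity.
    + intros D E F g f. simpl. split; [|split; [|split]]; intros; try (apply sig_inj); reflexivity.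
  - exists eta. split.
    + intros X Y f. simpl. split; [|split; [|split]]; intros; simpl; try reflexivity.
      * apply sig_inj; simpl; unfold F1_fs; simpl. rewrite (m_zero (hg_mor f)). reflexivity.
      * apply sig_inj; simpl; unfold F1_fv; simpl. rewrite (m_zeroO (hg_mor f)). reflexivity.
    + intros X. exists (eta_inv X). simpl. split.
      * split; [|split; [|split]]; intros; reflexivity.
      * split; [|split; [|split]]; intros; simpl; try reflexivity.
        -- apply eta_K2.
        -- apply eta_K4.
  - exists eps. split.
    + intros D E f. simpl. split; [|split; [|split]]; intros; simpl; try reflexivity.
      * destruct a as [[x px] y]. unfold G_phi, F1_fs; simpl.
        rewrite (m_hom (dm_SV f)), dm_he. reflexivity.
      * destruct x as [[x px] y]. unfold G_psi, F1_fv; simpl.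
        rewrite (m_homO (dm_SV f)), dm_oe. reflexivity.
    + intros D. exists (eps_inv D). simpl. split.
      * split; [|split; [|split]]; intros; simpl; try reflexivity.
        -- apply phiinv_phi.
        -- apply psiinv_psi.
      * split; [|split; [|split]]; intros; simpl; try reflexivity.
        -- apply phi_phiinv.
        -- apply psi_psiinv.
Qed.
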